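(* For every continuously differentiable $h:\mathbb{R}\to(0,\infty)$, $$T\ \ge\ \mathrm{sech}^2\left\{\frac12\int_{-\infty}^{\infty}\left[\,\big|(\ln h)'\big|+\frac{|k^2-h^2|}{h}\right]\mathrm{d}x\right\}.$$
   Context: Standing setup: $k^2:\mathbb{R}\to\mathbb{R}$ is a piecewise continuous function (it may be negative somewhere) with $k^2(x)\to k_{\pm\infty}^2$ as $x\to\pm\infty$, where $k_{\pm\infty}>0$ and $k^2-k_{\pm\infty}^2$ is integrable near $\pm\infty$. For the equation $u''+k^2(x)u=0$ there is a solution with $u(x)=e^{ik_{-\infty}x}+r\,e^{-ik_{-\infty}x}+o(1)$ as $x\to-\infty$ and $u(x)=\tau\,e^{ik_{+\infty}x}+o(1)$ as $x\to+\infty$; the transmission probability is $T=(k_{+\infty}/k_{-\infty})|\tau|^2$. Here $\mathrm{sech}=1/\cosh$, and if the integral equals $+\infty$ the bound is read as the trivial statement $T\ge 0$. *)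

(* Defs.v *)
From Stdlib Require Import Reals Lra List.
Open Scope R_scope.

Definition has_left_limit (f : R -> R) (x : R) : Prop :=
  exists L, forall eps, 0 < eps -> exists delta, 0 < delta /\
    forall y, x - delta < y < x -> Rabs (f y - L) < eps.

Definition has_right_limit (f : R -> R) (x : R) : Prop :=
  exists L, forall eps, 0 < eps -> exists delta, 0 < delta /\
    forall y, x < y < x + delta -> Rabs (f y - L) < eps.

Definition piecewise_continuous (f : R -> R) : Prop :=
  forall a b, a < b -> exists l : list R,
    (forall x, a <= x <= b -> ~ In x l -> continuity_pt f x) /\
    (forall x, In x l -> has_left_limit f x /\ has_right_limit f x).

Definition integral_on (f : R -> R) (a b v : R) : Prop :=
  exists pr : Riemann_integrable f a b, RiemannInt pr = v.

Definition integrable_near_pinf (f : R -> R) : Prop :=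
  exists M C, forall b v, M <= b -> integral_on (fun x => Rabs (f x)) M b v -> v <= C.

Definition integrable_near_minf (f : R -> R) : Prop :=
  exists M C, forall a v, a <= M -> integral_on (fun x => Rabs (f x)) a M v -> v <= C.

(* Improper integral over R of a nonnegative function, with finite value I:
   I is the supremum of the integrals over compact intervals. *)
Definition improper_integral_R (f : R -> R) (I : R) : Prop :=
  is_lub (fun v => exists a b, a <= b /\ integral_on f a b v) I.

Definition lim_pinf (f : R -> R) (L : R) : Prop :=
  forall eps, 0 < eps -> exists M, forall x, M < x -> Rabs (f x - L) < eps.

Definition lim_minf (f : R -> R) (L : R) : Prop :=
  forall eps, 0 < eps -> exists M, forall x, x < M -> Rabs (f x - L) < eps.

(* Real solutions of u'' + q u = 0 with q piecewise continuous:
   u is C^1 and u' is differentiable with derivative -q u wherever q is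
   continuous (equivalently u' is the integral of -q u). *)
Definition is_solution (q u : R -> R) : Prop :=
  exists u' : R -> R,
    (forall x, derivable_pt_lim u x (u' x)) /\ continuity u' /\
    (forall x, continuity_pt q x -> derivable_pt_lim u' x (- q x * u x)).

Definition sech (x : R) : R := / cosh x.

(* Main.v *)
Require Import Defs.
From Stdlib Require Import Reals Lra Lia Psatz List Classical ClassicalEpsilon FunctionalExtensionality.
Open Scope R_scope.

Lemma Deq f x a b : derivable_pt_lim f x a -> a = b -> derivable_pt_lim f x b.
Proof. intros H ->; exact H. Qed.
Lemma Dext f g x a : (forall t, f t = g t) -> derivable_pt_lim f x a -> derivable_pt_lim g x a.
Proof. intros E H. apply (derivable_pt_lim_ext f g x a E H). Qed.
Lemma Dplus f g x a b : derivable_pt_lim f x a -> derivable_pt_lim g x b ->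
  derivable_pt_lim (fun t => f t + g t) x (a + b).
Proof. intros. exact (derivable_pt_lim_plus f g x a b H H0). Qed.
Lemma Dminus f g x a b : derivable_pt_lim f x a -> derivable_pt_lim g x b ->
  derivable_pt_lim (fun t => f t - g t) x (a - b).
Proof. intros. exact (derivable_pt_lim_minus f g x a b H H0). Qed.
Lemma Dmult f g x a b : derivable_pt_lim f x a -> derivable_pt_lim g x b ->
  derivable_pt_lim (fun t => f t * g t) x (a * g x + f x * b).
Proof. intros. exact (derivable_pt_lim_mult f g x a b H H0). Qed.
Lemma Dconst c x : derivable_pt_lim (fun _ => c) x 0.
Proof. exact (derivable_pt_lim_const c x). Qed.
Lemma Did x : derivable_pt_lim (fun t => t) x 1.
Proof. exact (derivable_pt_lim_id x). Qed.
Lemma Ddiv f g x a b : derivable_pt_lim f x a -> derivable_pt_lim g x b -> g x <> 0 ->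
  derivable_pt_lim (fun t => f t / g t) x ((a * g x - b * f x) / Rsqr (g x)).
Proof. intros. exact (derivable_pt_lim_div f g x a b H H0 H1). Qed.
Lemma Dcomp f g x a b : derivable_pt_lim f x a -> derivable_pt_lim g (f x) b ->
  derivable_pt_lim (fun t => g (f t)) x (b * a).
Proof. intros. exact (derivable_pt_lim_comp f g x a b H H0). Qed.
Lemma Dln f x a : derivable_pt_lim f x a -> 0 < f x ->
  derivable_pt_lim (fun t => ln (f t)) x (/ f x * a).
Proof. intros. apply Dcomp; auto. apply derivable_pt_lim_ln; auto. Qed.
Lemma Dsqrt f x a : derivable_pt_lim f x a -> 0 < f x ->
  derivable_pt_lim (fun t => sqrt (f t)) x (/ (2 * sqrt (f x)) * a).
Proof. intros. apply Dcomp; auto. apply derivable_pt_lim_sqrt; auto. Qed.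
Lemma Dcos f x a : derivable_pt_lim f x a ->
  derivable_pt_lim (fun t => cos (f t)) x (- sin (f x) * a).
Proof. intros. apply Dcomp; auto. apply derivable_pt_lim_cos. Qed.
Lemma Dsin f x a : derivable_pt_lim f x a ->
  derivable_pt_lim (fun t => sin (f t)) x (cos (f x) * a).
Proof. intros. apply Dcomp; auto. apply derivable_pt_lim_sin. Qed.

Lemma Cplus f g x : continuity_pt f x -> continuity_pt g x -> continuity_pt (fun t => f t + g t) x.
Proof. intros. exact (continuity_pt_plus f g x H H0). Qed.
Lemma Cminus f g x : continuity_pt f x -> continuity_pt g x -> continuity_pt (fun t => f t - g t) x.
Proof. intros. exact (continuity_pt_minus f g x H H0). Qed.
Lemma Cmult f g x : continuity_pt f x -> continuity_pt g x -> continuity_pt (fun t => f t * g t) x.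
Proof. intros. exact (continuity_pt_mult f g x H H0). Qed.
Lemma Cconst c x : continuity_pt (fun _ => c) x.
Proof. apply continuity_pt_const. intros a b; reflexivity. Qed.
Lemma Cinv f x : continuity_pt f x -> f x <> 0 -> continuity_pt (fun t => / f t) x.
Proof. intros. exact (continuity_pt_inv f x H H0). Qed.
Lemma Ccomp f g x : continuity_pt f x -> continuity_pt g (f x) -> continuity_pt (fun t => g (f t)) x.
Proof. intros. exact (continuity_pt_comp f g x H H0). Qed.
Lemma Cdiv f g x : continuity_pt f x -> continuity_pt g x -> g x <> 0 -> continuity_pt (fun t => f t / g t) x.
Proof. intros. unfold Rdiv. apply Cmult; auto. apply Cinv; auto. Qed.
Lemma Cid x : continuity_pt (fun t => t) x.
Proof. apply derivable_continuous_pt. exists 1. apply Did. Qed.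
Lemma Cln f x : continuity_pt f x -> 0 < f x -> continuity_pt (fun t => ln (f t)) x.
Proof. intros. apply Ccomp; auto. apply derivable_continuous_pt. exists (/ f x). apply derivable_pt_lim_ln; auto. Qed.
Lemma Csqrt f x : continuity_pt f x -> 0 <= f x -> continuity_pt (fun t => sqrt (f t)) x.
Proof. intros. apply Ccomp; auto. apply continuity_pt_sqrt; auto. Qed.
Lemma Cabs f x : continuity_pt f x -> continuity_pt (fun t => Rabs (f t)) x.
Proof. intros. apply Ccomp; auto. apply Rcontinuity_abs. Qed.
Lemma Cpow f x n : continuity_pt f x -> continuity_pt (fun t => f t ^ n) x.
Proof. intros. induction n. simpl. apply Cconst. simpl. apply Cmult; auto. Qed.
Lemma Dcont f x a : derivable_pt_lim f x a -> continuity_pt f x.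
Proof. intros. apply derivable_continuous_pt. exists a. exact H. Qed.


Definition RL f c L := limit1_in f (fun y => c < y) L c.
Definition LL f c L := limit1_in f (fun y => y < c) L c.

Lemma hrl_RL f c : has_right_limit f c -> exists L, RL f c L.
Proof.
  intros [L HL]. exists L. unfold RL, limit1_in, limit_in; simpl; unfold Rdist.
  intros eps Heps. destruct (HL eps Heps) as [d [Hd H]]. exists d; split; auto.
  intros x [Hx1 Hx2]. apply H. apply Rabs_def2 in Hx2. lra.
Qed.
Lemma hll_LL f c : has_left_limit f c -> exists L, LL f c L.
Proof.
  intros [L HL]. exists L. unfold LL, limit1_in, limit_in; simpl; unfold Rdist.
  intros eps Heps. destruct (HL eps Heps) as [d [Hd H]]. exists d; split; auto.
  intros x [Hx1 Hx2]. apply H. apply Rabs_def2 in Hx2. lra.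
Qed.
Lemma RL_hrl f c L : RL f c L -> has_right_limit f c.
Proof.
  intros HL. exists L. unfold RL, limit1_in, limit_in in HL; simpl in HL; unfold Rdist in HL.
  intros eps Heps. destruct (HL eps Heps) as [d [Hd H]]. exists d; split; auto.
  intros y Hy. apply H. split. lra. apply Rabs_def1; lra.
Qed.
Lemma LL_hll f c L : LL f c L -> has_left_limit f c.
Proof.
  intros HL. exists L. unfold LL, limit1_in, limit_in in HL; simpl in HL; unfold Rdist in HL.
  intros eps Heps. destruct (HL eps Heps) as [d [Hd H]]. exists d; split; auto.
  intros y Hy. apply H. split. lra. apply Rabs_def1; lra.
Qed.

Lemma cont_lim f D c : continuity_pt f c -> (forall y, D y -> c <> y) -> limit1_in f D (f c) c.
Proof.
  intros Hc HD. unfold continuity_pt, continue_in, limit1_in, limit_in in *; simpl in *.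
  intros eps Heps. destruct (Hc eps Heps) as [d [Hd H]]. exists d; split; auto.
  intros x [Hx1 Hx2]. apply H. split; auto. split; auto. exact I.
Qed.
Lemma lim_cont f c : limit1_in f (D_x no_cond c) (f c) c -> continuity_pt f c.
Proof. auto. Qed.

Lemma limit_abs f D l x0 : limit1_in f D l x0 -> limit1_in (fun x => Rabs (f x)) D (Rabs l) x0.
Proof.
  unfold limit1_in, limit_in; simpl; unfold Rdist. intros H eps Heps.
  destruct (H eps Heps) as [d [Hd H1]]. exists d; split; auto.
  intros x Hx. eapply Rle_lt_trans. apply Rabs_triang_inv2. auto.
Qed.
Lemma limit_const D a x0 : limit1_in (fun _ => a) D a x0.
Proof. exact (limit_free (fun _ => a) D x0 x0). Qed.

Section Comp.
Variables p q s : R -> R.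
Hypothesis (Hp : continuity p) (Hq : continuity q) (Hs : continuity s).
Definition compo (g : R -> R) x := Rabs (p x) + Rabs (g x - q x) * s x.

Lemma compo_lim g D L c : (forall y, D y -> c <> y) -> limit1_in g D L c ->
  limit1_in (compo g) D (Rabs (p c) + Rabs (L - q c) * s c) c.
Proof.
  intros HD H. unfold compo. apply limit_plus.
  apply limit_abs. apply cont_lim; auto.
  apply limit_mul. apply limit_abs. apply limit_minus; auto. apply cont_lim; auto.
  apply cont_lim; auto.
Qed.

Lemma compo_pc g : piecewise_continuous g -> piecewise_continuous (compo g).
Proof.
  intros Hg a b Hab. destruct (Hg a b Hab) as [l [H1 H2]]. exists l. split.
  - intros x Hx Hn. apply lim_cont.
    apply (compo_lim g (D_x no_cond x) (g x) x). intros y [_ Hy]; auto. apply H1; auto.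
  - intros x Hx. destruct (H2 x Hx) as [Hl Hr]. split.
    + destruct (hll_LL _ _ Hl) as [L HL]. eapply LL_hll. apply compo_lim; eauto.
      intros; lra.
    + destruct (hrl_RL _ _ Hr) as [L HL]. eapply RL_hrl. apply compo_lim; eauto.
      intros; lra.
Qed.
End Comp.


Lemma RI_open_ext f g a b : a < b -> (forall x, a < x < b -> f x = g x) ->
  Riemann_integrable g a b -> Riemann_integrable f a b.
Proof.
  intros Hab Hfg Hg eps. destruct (Hg eps) as [phi [psi [H1 H2]]].
  set (ph := fun t => if Req_dec_T t a then f a else if Req_dec_T t b then f b else phi t).
  assert (Hst : IsStepFun ph a b).
  { destruct (pre phi) as [l [l0 Hc]]. exists l. exists l0.
    destruct Hc as [Ho [H0 [Hn [Hlen Hk]]]].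
    rewrite Rmin_left in H0 by lra. rewrite Rmax_right in Hn by lra.
    split; [|split; [|split; [|split]]]; auto.
    rewrite Rmin_left by lra; auto. rewrite Rmax_right by lra; auto.
    intros i Hi. specialize (Hk i Hi). unfold constant_D_eq, open_interval in *.
    intros x Hx. rewrite <- (Hk x Hx).
    pose proof (proj1 (RList.RList_P6 l) Ho) as Ho2.
    assert (A1 : RList.pos_Rl l 0 <= RList.pos_Rl l i) by (apply Ho2; lia).
    assert (A2 : RList.pos_Rl l (S i) <= RList.pos_Rl l (pred (length l))) by (apply Ho2; lia).
    unfold ph. destruct (Req_dec_T x a). lra. destruct (Req_dec_T x b). lra. auto. }
  exists (mkStepFun Hst). exists psi. split; auto.
  intros t Ht. simpl. unfold ph.
  rewrite Rmin_left in Ht by lra; rewrite Rmax_right in Ht by lra.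
  assert (Hpos : forall u, a <= u <= b -> 0 <= psi u).
  { intros u Hu. eapply Rle_trans. apply Rabs_pos. apply H1.
    rewrite Rmin_left by lra; rewrite Rmax_right by lra; auto. }
  destruct (Req_dec_T t a). subst. rewrite Rminus_diag, Rabs_R0. apply Hpos; lra.
  destruct (Req_dec_T t b). subst. rewrite Rminus_diag, Rabs_R0. apply Hpos; lra.
  rewrite Hfg by lra. apply H1. rewrite Rmin_left by lra; rewrite Rmax_right by lra; auto.
Qed.

Lemma ext_cont f a b La Lb : a < b -> (forall x, a < x < b -> continuity_pt f x) ->
  RL f a La -> LL f b Lb ->
  forall x, a <= x <= b ->
  continuity_pt (fun t => if Rle_dec t a then La else if Rle_dec b t then Lb else f t) x.
Proof.
  intros Hab Hc HLa HLb x Hx.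
  set (g := fun t => if Rle_dec t a then La else if Rle_dec b t then Lb else f t).
  destruct (Req_dec x a) as [Ea|Na]; [|destruct (Req_dec x b) as [Eb|Nb]].
  - subst x. unfold continuity_pt, continue_in, limit1_in, limit_in; simpl; unfold Rdist.
    intros eps Heps. unfold RL, limit1_in, limit_in in HLa; simpl in HLa; unfold Rdist in HLa.
    destruct (HLa eps Heps) as [d [Hd H]]. exists (Rmin d (b - a)). split.
    apply Rmin_pos; lra. intros y [_ Hy].
    assert (Hy1 := Rlt_le_trans _ _ _ Hy (Rmin_l _ _)).
    assert (Hy2 := Rlt_le_trans _ _ _ Hy (Rmin_r _ _)). apply Rabs_def2 in Hy2.
    unfold g. destruct (Rle_dec a a); [|lra].
    destruct (Rle_dec y a). rewrite Rminus_diag, Rabs_R0; auto.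
    destruct (Rle_dec b y). lra. apply H. split; auto. lra.
  - subst x. unfold continuity_pt, continue_in, limit1_in, limit_in; simpl; unfold Rdist.
    intros eps Heps. unfold LL, limit1_in, limit_in in HLb; simpl in HLb; unfold Rdist in HLb.
    destruct (HLb eps Heps) as [d [Hd H]]. exists (Rmin d (b - a)). split.
    apply Rmin_pos; lra. intros y [_ Hy].
    assert (Hy1 := Rlt_le_trans _ _ _ Hy (Rmin_l _ _)).
    assert (Hy2 := Rlt_le_trans _ _ _ Hy (Rmin_r _ _)). apply Rabs_def2 in Hy2.
    unfold g. destruct (Rle_dec b a); [lra|]. destruct (Rle_dec b b); [|lra].
    destruct (Rle_dec y a). lra.
    destruct (Rle_dec b y). rewrite Rminus_diag, Rabs_R0; auto.
    apply H. split; auto. lra.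
  - apply continuity_pt_locally_ext with (f := f) (a := Rmin (x - a) (b - x)).
    apply Rmin_pos; lra.
    intros y Hy. unfold Rdist in Hy.
    assert (Hy1 := Rlt_le_trans _ _ _ Hy (Rmin_l _ _)).
    assert (Hy2 := Rlt_le_trans _ _ _ Hy (Rmin_r _ _)). apply Rabs_def2 in Hy1. apply Rabs_def2 in Hy2.
    unfold g. destruct (Rle_dec y a). lra. destruct (Rle_dec b y). lra. auto.
    apply Hc; lra.
Qed.

Lemma RI_base f a b : a < b -> (forall x, a < x < b -> continuity_pt f x) ->
  has_right_limit f a -> has_left_limit f b -> inhabited (Riemann_integrable f a b).
Proof.
  intros Hab Hc Ha Hb. destruct (hrl_RL _ _ Ha) as [La HLa]. destruct (hll_LL _ _ Hb) as [Lb HLb].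
  constructor. eapply RI_open_ext. exact Hab.
  2: { apply continuity_implies_RiemannInt. lra. apply (ext_cont f a b La Lb); auto. }
  intros x Hx. simpl. destruct (Rle_dec x a). lra. destruct (Rle_dec b x). lra. auto.
Qed.

Lemma RI_list f l : forall a b, a < b -> (forall x, a < x < b -> ~ In x l -> continuity_pt f x) ->
  (forall x, In x l -> has_left_limit f x /\ has_right_limit f x) ->
  has_right_limit f a -> has_left_limit f b -> inhabited (Riemann_integrable f a b).
Proof.
  induction l as [|c l IH]; intros a b Hab Hc Hl Ha Hb.
  - apply RI_base; auto.
  - destruct (Rlt_dec a c) as [Hac|Hac]; [destruct (Rlt_dec c b) as [Hcb|Hcb]|].
    + destruct (Hl c (or_introl eq_refl)) as [Hcl Hcr].
      destruct (IH a c Hac) as [R1]; auto.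
      { intros x Hx Hn. apply Hc. lra. intros [E|E]; [lra|auto]. }
      { intros; apply Hl; right; auto. }
      destruct (IH c b Hcb) as [R2]; auto.
      { intros x Hx Hn. apply Hc. lra. intros [E|E]; [lra|auto]. }
      { intros; apply Hl; right; auto. }
      constructor. apply (RiemannInt_P21 (b:=c)); auto; lra.
    + apply IH; auto. intros x Hx Hn. apply Hc; auto. intros [E|E]; [lra|auto].
      intros; apply Hl; right; auto.
    + apply IH; auto. intros x Hx Hn. apply Hc; auto. intros [E|E]; [lra|auto].
      intros; apply Hl; right; auto.
Qed.

Lemma cont_hrl f c : continuity_pt f c -> has_right_limit f c.
Proof. intros H. apply (RL_hrl f c (f c)). apply cont_lim; auto. intros; lra. Qed.
Lemma cont_hll f c : continuity_pt f c -> has_left_limit f c.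
Proof. intros H. apply (LL_hll f c (f c)). apply cont_lim; auto. intros; lra. Qed.

Lemma PCI f : piecewise_continuous f -> forall a b, inhabited (Riemann_integrable f a b).
Proof.
  intros Hpc a b. destruct (Rtotal_order a b) as [H|[H|H]].
  - destruct (Hpc a b H) as [l [H1 H2]]. apply (RI_list f l); auto.
    intros; apply H1; auto; lra.
    destruct (classic (In a l)). apply H2; auto. apply cont_hrl; apply H1; auto; lra.
    destruct (classic (In b l)). apply H2; auto. apply cont_hll; apply H1; auto; lra.
  - subst. constructor. apply RiemannInt_P7.
  - destruct (Hpc b a H) as [l [H1 H2]]. destruct (RI_list f l b a) as [R]; auto.
    intros; apply H1; auto; lra.
    destruct (classic (In b l)). apply H2; auto. apply cont_hrl; apply H1; auto; lra.
    destruct (classic (In a l)). apply H2; auto. apply cont_hll; apply H1; auto; lra.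
    constructor. apply RiemannInt_P1; auto.
Qed.


Definition RIP {f a b} (H : inhabited (Riemann_integrable f a b)) : Riemann_integrable f a b :=
  epsilon H (fun _ => True).
Definition Int f (H : forall a b, inhabited (Riemann_integrable f a b)) a b :=
  RiemannInt (RIP (H a b)).

Lemma abs_le_b x y : Rabs x <= y -> - y <= x <= y.
Proof. unfold Rabs; destruct (Rcase_abs x); intros; lra. Qed.

Section IntS.
Variable f : R -> R.
Variable H : forall a b, inhabited (Riemann_integrable f a b).

Lemma Int_eq a b (pr : Riemann_integrable f a b) : RiemannInt pr = Int f H a b.
Proof. apply RiemannInt_P5. Qed.
Lemma Int_chasles a b c : Int f H a b + Int f H b c = Int f H a c.
Proof. apply RiemannInt_P26. Qed.
Lemma Int_refl a : Int f H a a = 0.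
Proof. apply RiemannInt_P9. Qed.
Lemma Int_swap a b : Int f H a b = - Int f H b a.
Proof. pose proof (Int_chasles a b a). rewrite Int_refl in H0. lra. Qed.
Lemma Int_bound a b l u : a <= b -> (forall x, a < x < b -> l <= f x <= u) ->
  l * (b - a) <= Int f H a b <= u * (b - a).
Proof. intros. apply RiemannInt_const_bound; auto. Qed.
Lemma Int_nonneg a b : a <= b -> (forall x, a < x < b -> 0 <= f x) -> 0 <= Int f H a b.
Proof.
  intros. unfold Int.
  pose proof (RiemannInt_P15 (RiemannInt_P14 a b 0)).
  assert (RiemannInt (RiemannInt_P14 a b 0) <= RiemannInt (RIP (H a b))).
  apply RiemannInt_P19; auto. intros; unfold fct_cte; auto. lra.
Qed.
Lemma Int_on a b : a <= b -> integral_on f a b (Int f H a b).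
Proof. intros. exists (RIP (H a b)). reflexivity. Qed.
Lemma Int_mono a b (g : R -> R) (Hg : forall a b, inhabited (Riemann_integrable g a b)) :
  a <= b -> (forall x, a < x < b -> f x <= g x) -> Int f H a b <= Int g Hg a b.
Proof. intros. apply RiemannInt_P19; auto. Qed.

Hypothesis Hloc : forall t, exists d M, 0 < d /\ forall y, t - d < y < t + d -> y <> t -> Rabs (f y) <= M.

Lemma Int_cont a t : continuity_pt (fun y => Int f H a y) t.
Proof.
  destruct (Hloc t) as [d [M [Hd HM]]].
  unfold continuity_pt, continue_in, limit1_in, limit_in; simpl; unfold Rdist.
  intros eps Heps. exists (Rmin d (eps / (Rabs M + 1))). split.
  apply Rmin_pos; auto. apply Rdiv_lt_0_compat; auto. pose proof (Rabs_pos M); lra.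
  intros y [_ Hy].
  assert (Hy1 := Rlt_le_trans _ _ _ Hy (Rmin_l _ _)).
  assert (Hy2 := Rlt_le_trans _ _ _ Hy (Rmin_r _ _)).
  rewrite <- (Int_chasles a t y). replace (Int f H a t + Int f H t y - Int f H a t) with (Int f H t y) by ring.
  assert (HM1 : 0 <= Rabs M) by apply Rabs_pos.
  assert (Hq : Rabs (y - t) * (Rabs M + 1) < eps).
  { apply (Rmult_lt_compat_r (Rabs M + 1)) in Hy2; [|lra].
    unfold Rdiv in Hy2. rewrite Rmult_assoc, Rinv_l in Hy2 by lra. lra. }
  destruct (Rle_dec t y).
  - assert (B := Int_bound t y (- (Rabs M)) (Rabs M) r).
    destruct B. intros x Hx. assert (Rabs (f x) <= M). apply HM.
    apply Rabs_def2 in Hy1. lra. lra.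
    pose proof (Rle_abs M). apply abs_le_b. lra.
    rewrite Rabs_right in Hq by lra.
    apply Rabs_def1; nra.
  - assert (B := Int_bound y t (- (Rabs M)) (Rabs M) ltac:(lra)).
    rewrite Int_swap. destruct B. intros x Hx. assert (Rabs (f x) <= M). apply HM.
    apply Rabs_def2 in Hy1. lra. lra.
    pose proof (Rle_abs M). apply abs_le_b. lra.
    rewrite Rabs_left in Hq by lra.
    apply Rabs_def1; nra.
Qed.
End IntS.

Lemma Int_ftc f H a t : continuity_pt f t -> derivable_pt_lim (fun y => Int f H a y) t (f t).
Proof.
  intros Hc eps Heps.
  unfold continuity_pt, continue_in, limit1_in, limit_in in Hc; simpl in Hc; unfold Rdist in Hc.
  destruct (Hc (eps/2) ltac:(lra)) as [d [Hd Hd2]].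
  exists (mkposreal d Hd). intros s Hs Hsd. simpl in Hsd.
  rewrite <- (Int_chasles f H a t (t + s)).
  replace (Int f H a t + Int f H t (t + s) - Int f H a t) with (Int f H t (t + s)) by ring.
  assert (Hb : forall x, Rabs (x - t) < d -> f t - eps/2 <= f x <= f t + eps/2).
  { intros x Hx. destruct (Req_dec x t). subst; lra.
    assert (Rabs (f x - f t) < eps / 2). apply Hd2. split; auto. split; auto. exact I.
    apply Rabs_def2 in H1; lra. }
  apply Rabs_def2 in Hsd.
  destruct (Rle_dec 0 s).
  - destruct (Int_bound f H t (t + s) (f t - eps/2) (f t + eps/2)) as [B1 B2]. lra.
    intros x Hx. apply Hb. apply Rabs_def1; lra.
    assert (0 < s) by lra.
    replace (t + s - t) with s in * by ring.
    apply Rabs_def1.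
    apply (Rmult_lt_reg_r s); auto. unfold Rdiv. rewrite Rmult_minus_distr_r, Rmult_assoc, Rinv_l by lra. nra.
    apply (Rmult_lt_reg_r s); auto. unfold Rdiv. rewrite Rmult_minus_distr_r, Rmult_assoc, Rinv_l by lra. nra.
  - destruct (Int_bound f H (t + s) t (f t - eps/2) (f t + eps/2)) as [B1 B2]. lra.
    intros x Hx. apply Hb. apply Rabs_def1; lra.
    rewrite Int_swap.
    assert (s < 0) by lra.
    replace (t - (t + s)) with (- s) in * by ring.
    apply Rabs_def1.
    apply (Rmult_lt_reg_r (-s)); [lra|]. unfold Rdiv.
    replace ((- Int f H (t + s) t * / s - f t) * - s) with (Int f H (t + s) t + f t * s).
    nra. field. lra.
    apply (Rmult_lt_reg_r (-s)); [lra|]. unfold Rdiv.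
    replace ((- Int f H (t + s) t * / s - f t) * - s) with (Int f H (t + s) t + f t * s).
    nra. field. lra.
Qed.

Lemma mono_list (D : R -> R) l : forall x y, x <= y ->
  (forall t, x <= t <= y -> continuity_pt D t) ->
  (forall t, x < t < y -> ~ In t l -> exists d, derivable_pt_lim D t d /\ 0 <= d) ->
  D x <= D y.
Proof.
  induction l as [|c l IH]; intros x y Hxy Hc Hd.
  - destruct (Req_dec x y). subst; lra.
    assert (pr1 : forall c, x < c < y -> derivable_pt D c).
    { intros c Hcc. destruct (constructive_indefinite_description _ (Hd c Hcc (fun A => A))) as [d [Hd1 _]].
      exists d; exact Hd1. }
    destruct (MVT D (fun t => t) x y pr1 (fun c _ => derivable_pt_id c)) as [c [P HP]].
    lra. auto. intros; apply Cid.
    rewrite derive_pt_id in HP.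
    destruct (Hd c P (fun A => A)) as [d [Hd1 Hd2]].
    assert (derive_pt D c (pr1 c P) = d). apply derive_pt_eq_0. auto.
    rewrite H0 in HP. nra.
  - destruct (Rlt_dec x c) as [Hac|Hac]; [destruct (Rlt_dec c y) as [Hcb|Hcb]|].
    + apply Rle_trans with (D c).
      apply IH; auto; try lra. intros; apply Hc; lra.
      intros t Ht Hn. apply Hd. lra. intros [E|E]; [lra|auto].
      apply IH; auto; try lra. intros; apply Hc; lra.
      intros t Ht Hn. apply Hd. lra. intros [E|E]; [lra|auto].
    + apply IH; auto. intros t Ht Hn. apply Hd; auto. intros [E|E]; [lra|auto].
    + apply IH; auto. intros t Ht Hn. apply Hd; auto. intros [E|E]; [lra|auto].
Qed.


Definition Hloc_def (f : R -> R) := forall t, exists d M, 0 < d /\ forall y, t - d < y < t + d -> y <> t -> Rabs (f y) <= M.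

Lemma pc_loc f : piecewise_continuous f -> Hloc_def f.
Proof.
  intros Hpc t. destruct (Hpc (t - 1) (t + 1) ltac:(lra)) as [l [H1 H2]].
  destruct (classic (In t l)) as [Hin|Hin].
  - destruct (H2 t Hin) as [[L1 HL1] [L2 HL2]].
    destruct (HL1 1 ltac:(lra)) as [d1 [Hd1 H3]]. destruct (HL2 1 ltac:(lra)) as [d2 [Hd2 H4]].
    exists (Rmin d1 d2), (Rabs L1 + Rabs L2 + 1). split. apply Rmin_pos; auto.
    intros y Hy Hyt. pose proof (Rmin_l d1 d2). pose proof (Rmin_r d1 d2).
    pose proof (Rabs_pos L1). pose proof (Rabs_pos L2).
    destruct (Rlt_dec y t).
    + assert (Rabs (f y - L1) < 1) by (apply H3; lra).
      pose proof (Rabs_triang (f y - L1) L1) as T. replace (f y - L1 + L1) with (f y) in T by ring. lra.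
    + assert (Rabs (f y - L2) < 1) by (apply H4; lra).
      pose proof (Rabs_triang (f y - L2) L2) as T. replace (f y - L2 + L2) with (f y) in T by ring. lra.
  - assert (Hc : continuity_pt f t) by (apply H1; auto; lra).
    unfold continuity_pt, continue_in, limit1_in, limit_in in Hc; simpl in Hc; unfold Rdist in Hc.
    destruct (Hc 1 ltac:(lra)) as [d [Hd H3]].
    exists d, (Rabs (f t) + 1). split; auto. intros y Hy Hyt.
    assert (Rabs (f y - f t) < 1). apply H3. split. split. exact I. auto. apply Rabs_def1; lra.
    pose proof (Rabs_triang (f y - f t) (f t)) as T. replace (f y - f t + f t) with (f y) in T by ring. lra.
Qed.

Lemma mono_abs (P g : R -> R) (Hg : forall a b, inhabited (Riemann_integrable g a b)) (c : R) l s t :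
  Hloc_def g -> 0 <= c -> s <= t -> (forall x, s <= x <= t -> continuity_pt P x) ->
  (forall x, s < x < t -> ~ In x l -> continuity_pt g x /\ exists d, derivable_pt_lim P x d /\ Rabs d <= c * g x) ->
  Rabs (P t - P s) <= c * Int g Hg s t.
Proof.
  intros Hl Hc Hst HP Hd.
  assert (A1 : c * Int g Hg s s + P s <= c * Int g Hg s t + P t).
  { apply (mono_list (fun x => c * Int g Hg s x + P x) l); auto.
    intros x Hx. apply Cplus; auto. apply Cmult. apply Cconst. apply Int_cont. auto.
    intros x Hx Hn. destruct (Hd x Hx Hn) as [Hgc [d [Hd1 Hd2]]].
    exists (0 * Int g Hg s x + c * g x + d). split.
    apply Dplus; auto. apply Dmult. apply Dconst. apply (Int_ftc g Hg s); auto.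
    apply abs_le_b in Hd2. lra. }
  assert (A2 : c * Int g Hg s s - P s <= c * Int g Hg s t - P t).
  { apply (mono_list (fun x => c * Int g Hg s x - P x) l); auto.
    intros x Hx. apply Cminus; auto. apply Cmult. apply Cconst. apply Int_cont. auto.
    intros x Hx Hn. destruct (Hd x Hx Hn) as [Hgc [d [Hd1 Hd2]]].
    exists (0 * Int g Hg s x + c * g x - d). split.
    apply Dminus; auto. apply Dmult. apply Dconst. apply (Int_ftc g Hg s); auto.
    apply abs_le_b in Hd2. lra. }
  rewrite Int_refl in A1, A2. apply Rabs_le. lra.
Qed.

Lemma tail_left g (Hg : forall a b, inhabited (Riemann_integrable g a b)) :
  (forall x, 0 <= g x) ->
  (exists M C, forall a v, a <= M -> integral_on g a M v -> v <= C) ->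
  forall eta, 0 < eta -> exists N, forall s t, s <= t <= N -> Int g Hg s t <= eta.
Proof.
  intros Hpos [M [C HMC]] eta Heta.
  set (S := fun v => exists a, a <= M /\ v = Int g Hg a M).
  assert (Hb : bound S). { exists C. intros v [a [Ha ->]]. apply (HMC a); auto. apply Int_on. auto. }
  assert (Hne : exists v, S v). { exists (Int g Hg M M). exists M. split; auto; lra. }
  destruct (completeness S Hb Hne) as [L [HL1 HL2]].
  destruct (classic (exists a0, a0 <= M /\ Int g Hg a0 M > L - eta)) as [[a0 [Ha0 Ha0']]|Hno].
  - exists a0. intros s t Hst.
    assert (Int g Hg s M <= L). apply HL1. exists s. split; auto; lra.
    rewrite <- (Int_chasles g Hg s t M) in H.
    rewrite <- (Int_chasles g Hg t a0 M) in H.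
    assert (0 <= Int g Hg t a0). apply Int_nonneg; auto; lra. lra.
  - exfalso. assert (L <= L - eta). apply HL2. intros v [a [Ha ->]].
    apply Rnot_gt_le. intro. apply Hno. exists a. auto. lra.
Qed.

Lemma tail_right g (Hg : forall a b, inhabited (Riemann_integrable g a b)) :
  (forall x, 0 <= g x) ->
  (exists M C, forall b v, M <= b -> integral_on g M b v -> v <= C) ->
  forall eta, 0 < eta -> exists N, forall s t, N <= s <= t -> Int g Hg s t <= eta.
Proof.
  intros Hpos [M [C HMC]] eta Heta.
  set (S := fun v => exists b, M <= b /\ v = Int g Hg M b).
  assert (Hb : bound S). { exists C. intros v [b [Hbb ->]]. apply (HMC b); auto. apply Int_on. auto. }
  assert (Hne : exists v, S v). { exists (Int g Hg M M). exists M. split; auto; lra. }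
  destruct (completeness S Hb Hne) as [L [HL1 HL2]].
  destruct (classic (exists b0, M <= b0 /\ Int g Hg M b0 > L - eta)) as [[b0 [Hb0 Hb0']]|Hno].
  - exists b0. intros s t Hst.
    assert (Int g Hg M t <= L). apply HL1. exists t. split; auto; lra.
    rewrite <- (Int_chasles g Hg M s t) in H.
    rewrite <- (Int_chasles g Hg M b0 s) in H.
    assert (0 <= Int g Hg b0 s). apply Int_nonneg; auto; lra. lra.
  - exfalso. assert (L <= L - eta). apply HL2. intros v [b [Hbb ->]].
    apply Rnot_gt_le. intro. apply Hno. exists b. auto. lra.
Qed.


Lemma bnd_lemma A U S k B : 0 < k -> Rabs U <= B -> Rabs S <= 1 ->
  Rabs (- (A * U / k) * S) <= B / k * Rabs A.
Proof.
  intros Hk HU HS. unfold Rdiv. rewrite Rabs_mult, Rabs_Ropp, !Rabs_mult.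
  rewrite (Rabs_inv k), (Rabs_right k) by lra.
  pose proof (Rabs_pos A). pose proof (Rabs_pos U). pose proof (Rabs_pos S).
  assert (0 < / k) by (apply Rinv_0_lt_compat; auto).
  replace (B * / k * Rabs A) with (Rabs A * B * / k * 1) by ring.
  assert (Rabs A * Rabs U <= Rabs A * B) by nra.
  assert (0 <= Rabs A * Rabs U * / k) by (apply Rmult_le_pos; nra).
  assert (Rabs A * Rabs U * / k <= Rabs A * B * / k) by (apply Rmult_le_compat_r; nra).
  nra.
Qed.

Lemma gk_pc k2 c : piecewise_continuous k2 -> piecewise_continuous (fun x => Rabs (k2 x - c)).
Proof.
  intros H. replace (fun x => Rabs (k2 x - c)) with (compo (fun _ => 0) (fun _ => c) (fun _ => 1) k2).
  apply compo_pc; auto; intro; apply Cconst.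
  apply functional_extensionality; intro; unfold compo. rewrite Rabs_R0; ring.
Qed.

Lemma cos_sin_period_neg a (n : nat) : cos (a - 2 * INR n * PI) = cos a /\ sin (a - 2 * INR n * PI) = sin a.
Proof.
  split.
  rewrite <- (cos_period (a - 2 * INR n * PI) n). f_equal; ring.
  rewrite <- (sin_period (a - 2 * INR n * PI) n). f_equal; ring.
Qed.
Lemma cos_sin_period_pos a (n : nat) : cos (a + 2 * INR n * PI) = cos a /\ sin (a + 2 * INR n * PI) = sin a.
Proof. split. apply cos_period. apply sin_period. Qed.

Lemma PQ_deriv k2 u u' k x : 0 < k -> derivable_pt_lim u x (u' x) ->
  derivable_pt_lim u' x (- k2 x * u x) ->
  derivable_pt_lim (fun t => u t * cos (k * t) - / k * u' t * sin (k * t)) x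
     (- ((k ^ 2 - k2 x) * u x / k) * sin (k * x)) /\
  derivable_pt_lim (fun t => u t * sin (k * t) + / k * u' t * cos (k * t)) x
     (- ((k ^ 2 - k2 x) * u x / k) * - cos (k * x)).
Proof.
  intros Hk H1 H2. split.
  - eapply Deq. apply Dminus. apply Dmult. apply H1. apply Dcos. apply Dmult. apply Dconst. apply Did.
    apply Dmult. apply Dmult. apply Dconst. apply H2. apply Dsin. apply Dmult. apply Dconst. apply Did.
    cbv beta. field. lra.
  - eapply Deq. apply Dplus. apply Dmult. apply H1. apply Dsin. apply Dmult. apply Dconst. apply Did.
    apply Dmult. apply Dmult. apply Dconst. apply H2. apply Dcos. apply Dmult. apply Dconst. apply Did.
    cbv beta. field. lra.
Qed.

Lemma PQ_cont u u' k x : (forall x, derivable_pt_lim u x (u' x)) -> continuity u' ->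
  continuity_pt (fun t => u t * cos (k * t) - / k * u' t * sin (k * t)) x /\
  continuity_pt (fun t => u t * sin (k * t) + / k * u' t * cos (k * t)) x.
Proof.
  intros H1 H2. assert (Cu : continuity_pt u x) by (eapply Dcont; apply H1).
  assert (Ck : continuity_pt (fun t => k * t) x) by (apply Cmult; [apply Cconst|apply Cid]).
  split.
  - apply Cminus. apply Cmult; auto. apply Ccomp; auto. apply continuity_cos.
    apply Cmult. apply Cmult. apply Cconst. apply H2. apply Ccomp; auto. apply continuity_sin.
  - apply Cplus. apply Cmult; auto. apply Ccomp; auto. apply continuity_sin.
    apply Cmult. apply Cmult. apply Cconst. apply H2. apply Ccomp; auto. apply continuity_cos.
Qed.

Lemma PQ_id u u' k x : 0 < k ->
  u x = (u x * cos (k * x) - / k * u' x * sin (k * x)) * cos (k * x) +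
        (u x * sin (k * x) + / k * u' x * cos (k * x)) * sin (k * x) /\
  u' x = k * (- (u x * cos (k * x) - / k * u' x * sin (k * x)) * sin (k * x) +
        (u x * sin (k * x) + / k * u' x * cos (k * x)) * cos (k * x)).
Proof.
  intros Hk. pose proof (sin2_cos2 (k * x)). unfold Rsqr in H. split.
  - transitivity (u x * (sin (k * x) * sin (k * x) + cos (k * x) * cos (k * x))). rewrite H; ring. ring.
  - transitivity (u' x * (sin (k * x) * sin (k * x) + cos (k * x) * cos (k * x))). rewrite H; ring. field. lra.
Qed.

Lemma abs_lin a b c : Rabs (a * cos c + b * sin c) <= Rabs a + Rabs b.
Proof.
  eapply Rle_trans. apply Rabs_triang. rewrite !Rabs_mult.
  pose proof (COS_bound c). pose proof (SIN_bound c).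
  assert (Rabs (cos c) <= 1) by (apply Rabs_le; lra).
  assert (Rabs (sin c) <= 1) by (apply Rabs_le; lra).
  pose proof (Rabs_pos a). pose proof (Rabs_pos b).
  pose proof (Rabs_pos (cos c)). pose proof (Rabs_pos (sin c)). nra.
Qed.


Lemma asym_left k2 u u' k al be :
  piecewise_continuous k2 -> 0 < k ->
  (forall x, derivable_pt_lim u x (u' x)) -> continuity u' ->
  (forall x, continuity_pt k2 x -> derivable_pt_lim u' x (- k2 x * u x)) ->
  integrable_near_minf (fun x => k2 x - k ^ 2) ->
  lim_minf (fun x => u x - (al * cos (k * x) + be * sin (k * x))) 0 ->
  lim_minf (fun x => u' x - k * (- al * sin (k * x) + be * cos (k * x))) 0.
Proof.
  intros Hpc Hk Hu1 Hu2 Hu3 Him Has.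
  set (g := fun x => Rabs (k2 x - k ^ 2)).
  assert (Hgpc : piecewise_continuous g) by (apply gk_pc; auto).
  pose (Hg := PCI g Hgpc).
  assert (Hgl := pc_loc g Hgpc).
  set (P := fun t => u t * cos (k * t) - / k * u' t * sin (k * t)).
  set (Q := fun t => u t * sin (k * t) + / k * u' t * cos (k * t)).
  destruct (Has 1 ltac:(lra)) as [M0 HM0].
  set (B := Rabs al + Rabs be + 1).
  assert (HB : forall x, x < M0 -> Rabs (u x) <= B).
  { intros x Hx. specialize (HM0 x Hx). rewrite Rminus_0_r in HM0.
    pose proof (abs_lin al be (k*x)) as T1.
    pose proof (Rabs_triang (u x - (al * cos (k * x) + be * sin (k * x))) (al * cos (k * x) + be * sin (k * x))) as T2.
    replace (u x - (al * cos (k * x) + be * sin (k * x)) + (al * cos (k * x) + be * sin (k * x))) with (u x) in T2 by ring.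
    unfold B; lra. }
  assert (HBp : 0 < B) by (unfold B; pose proof (Rabs_pos al); pose proof (Rabs_pos be); lra).
  assert (Hcau : forall e, 0 < e -> exists N, forall s t, s <= N -> t <= N ->
             Rabs (P t - P s) <= e /\ Rabs (Q t - Q s) <= e).
  { intros e He.
    destruct (tail_left g Hg (fun x => Rabs_pos _) Him (e * k / B)) as [N HN].
    apply Rdiv_lt_0_compat; nra.
    exists (Rmin N (M0 - 1)).
    assert (Hgen : forall s t, s <= t -> t <= Rmin N (M0 - 1) ->
               Rabs (P t - P s) <= e /\ Rabs (Q t - Q s) <= e).
    { intros s t Hst Ht.
      pose proof (Rmin_l N (M0 - 1)). pose proof (Rmin_r N (M0-1)).
      assert (HI : B / k * Int g Hg s t <= e).
      { specialize (HN s t ltac:(lra)).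
        apply Rmult_le_compat_l with (r := B / k) in HN.
        replace (B / k * (e * k / B)) with e in HN by (field; lra). auto.
        apply Rlt_le, Rdiv_lt_0_compat; lra. }
      destruct (Req_dec s t) as [E|Ne]. subst. rewrite !Rminus_diag, Rabs_R0. lra.
      destruct (Hpc s t ltac:(lra)) as [l [Hl1 Hl2]].
      split.
      - eapply Rle_trans; [|exact HI].
        apply (mono_abs P g Hg (B / k) l s t Hgl).
        apply Rlt_le, Rdiv_lt_0_compat; lra. lra.
        intros x _. apply (proj1 (PQ_cont u u' k x Hu1 Hu2)).
        intros x Hx Hn. assert (Hk2 : continuity_pt k2 x) by (apply Hl1; auto; lra).
        split. unfold g. apply Cabs. apply Cminus; auto. apply Cconst.
        eexists. split. apply (proj1 (PQ_deriv k2 u u' k x Hk (Hu1 x) (Hu3 x Hk2))).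
        unfold g. rewrite Rabs_minus_sym. apply bnd_lemma; auto. apply HB; lra.
        pose proof (SIN_bound (k*x)). apply Rabs_le; lra.
      - eapply Rle_trans; [|exact HI].
        apply (mono_abs Q g Hg (B / k) l s t Hgl).
        apply Rlt_le, Rdiv_lt_0_compat; lra. lra.
        intros x _. apply (proj2 (PQ_cont u u' k x Hu1 Hu2)).
        intros x Hx Hn. assert (Hk2 : continuity_pt k2 x) by (apply Hl1; auto; lra).
        split. unfold g. apply Cabs. apply Cminus; auto. apply Cconst.
        eexists. split. apply (proj2 (PQ_deriv k2 u u' k x Hk (Hu1 x) (Hu3 x Hk2))).
        unfold g. rewrite Rabs_minus_sym. apply bnd_lemma; auto. apply HB; lra.
        pose proof (COS_bound (k*x)). apply Rabs_le; lra. }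
    intros s t Hs Ht. destruct (Rle_dec s t). apply Hgen; auto.
    rewrite (Rabs_minus_sym (P t)), (Rabs_minus_sym (Q t)). apply Hgen; auto; lra. }
  intros eta Heta.
  set (e := eta / (8 * k)).
  assert (He : 0 < e) by (unfold e; apply Rdiv_lt_0_compat; lra).
  destruct (Hcau e He) as [N1 HN1].
  destruct (Has e He) as [N2 HN2].
  set (N3 := Rmin N1 N2 - 1).
  assert (HN3 : N3 = Rmin N1 N2 - 1) by reflexivity.
  pose proof (Rmin_l N1 N2). pose proof (Rmin_r N1 N2).
  destruct (INR_unbounded (Rabs N3 * k + 2)) as [n Hn].
  pose proof PI2_3_2. pose proof PI_4.
  set (s0 := (0 - 2 * INR n * PI) / k).
  set (s1 := (PI / 2 - 2 * INR n * PI) / k).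
  assert (Hks0 : k * s0 = 0 - 2 * INR n * PI) by (unfold s0; field; lra).
  assert (Hks1 : k * s1 = PI/2 - 2 * INR n * PI) by (unfold s1; field; lra).
  pose proof (Rabs_pos N3). pose proof (Rle_abs (- N3)) as RN3. rewrite Rabs_Ropp in RN3.
  pose proof (pos_INR n) as Pn.
  assert (Kn : k * N3 >= - (k * Rabs N3)) by nra.
  assert (Hs0 : s0 < N3).
  { apply (Rmult_lt_reg_l k); auto. rewrite Hks0. nra. }
  assert (Hs1 : s1 < N3).
  { apply (Rmult_lt_reg_l k); auto. rewrite Hks1. nra. }
  destruct (cos_sin_period_neg 0 n) as [C0 S0]. rewrite <- Hks0 in C0, S0. rewrite cos_0 in C0. rewrite sin_0 in S0.
  destruct (cos_sin_period_neg (PI/2) n) as [C1 S1]. rewrite <- Hks1 in C1, S1. rewrite cos_PI2 in C1. rewrite sin_PI2 in S1.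
  assert (HP0 : Rabs (P s0 - al) < e).
  { specialize (HN2 s0 ltac:(lra)). rewrite Rminus_0_r in HN2. rewrite C0, S0 in HN2.
    assert (E : P s0 = u s0) by (unfold P; rewrite C0, S0; ring). rewrite E.
    replace (al * 1 + be * 0) with al in HN2 by ring. exact HN2. }
  assert (HQ1 : Rabs (Q s1 - be) < e).
  { specialize (HN2 s1 ltac:(lra)). rewrite Rminus_0_r in HN2. rewrite C1, S1 in HN2.
    assert (E : Q s1 = u s1) by (unfold Q; rewrite C1, S1; ring). rewrite E.
    replace (al * 0 + be * 1) with be in HN2 by ring. exact HN2. }
  exists N3. intros t Ht.
  destruct (HN1 s0 t ltac:(lra) ltac:(lra)) as [A1 _].
  destruct (HN1 s1 t ltac:(lra) ltac:(lra)) as [_ A2].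
  rewrite Rminus_0_r.
  assert (E : u' t = k * (- P t * sin (k * t) + Q t * cos (k * t))) by (unfold P, Q; apply PQ_id; auto).
  rewrite E.
  replace (k * (- P t * sin (k * t) + Q t * cos (k * t)) - k * (- al * sin (k * t) + be * cos (k * t)))
    with (k * ((Q t - be) * cos (k * t) + (- (P t - al)) * sin (k * t))) by ring.
  rewrite Rabs_mult, (Rabs_right k) by lra.
  pose proof (abs_lin (Q t - be) (- (P t - al)) (k * t)) as X1. rewrite Rabs_Ropp in X1.
  pose proof (Rabs_triang (P t - P s0) (P s0 - al)) as X2. replace (P t - P s0 + (P s0 - al)) with (P t - al) in X2 by ring.
  pose proof (Rabs_triang (Q t - Q s1) (Q s1 - be)) as X3. replace (Q t - Q s1 + (Q s1 - be)) with (Q t - be) in X3 by ring.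
  assert (k * (4 * e) < eta) by (unfold e; field_simplify; lra).
  nra.
Qed.

Lemma asym_right k2 u u' k al be :
  piecewise_continuous k2 -> 0 < k ->
  (forall x, derivable_pt_lim u x (u' x)) -> continuity u' ->
  (forall x, continuity_pt k2 x -> derivable_pt_lim u' x (- k2 x * u x)) ->
  integrable_near_pinf (fun x => k2 x - k ^ 2) ->
  lim_pinf (fun x => u x - (al * cos (k * x) + be * sin (k * x))) 0 ->
  lim_pinf (fun x => u' x - k * (- al * sin (k * x) + be * cos (k * x))) 0.
Proof.
  intros Hpc Hk Hu1 Hu2 Hu3 Him Has.
  set (g := fun x => Rabs (k2 x - k ^ 2)).
  assert (Hgpc : piecewise_continuous g) by (apply gk_pc; auto).
  pose (Hg := PCI g Hgpc).
  assert (Hgl := pc_loc g Hgpc).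
  set (P := fun t => u t * cos (k * t) - / k * u' t * sin (k * t)).
  set (Q := fun t => u t * sin (k * t) + / k * u' t * cos (k * t)).
  destruct (Has 1 ltac:(lra)) as [M0 HM0].
  set (B := Rabs al + Rabs be + 1).
  assert (HB : forall x, M0 < x -> Rabs (u x) <= B).
  { intros x Hx. specialize (HM0 x Hx). rewrite Rminus_0_r in HM0.
    pose proof (abs_lin al be (k*x)) as T1.
    pose proof (Rabs_triang (u x - (al * cos (k * x) + be * sin (k * x))) (al * cos (k * x) + be * sin (k * x))) as T2.
    replace (u x - (al * cos (k * x) + be * sin (k * x)) + (al * cos (k * x) + be * sin (k * x))) with (u x) in T2 by ring.
    unfold B; lra. }
  assert (HBp : 0 < B) by (unfold B; pose proof (Rabs_pos al); pose proof (Rabs_pos be); lra).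
  assert (Hcau : forall e, 0 < e -> exists N, forall s t, N <= s -> N <= t ->
             Rabs (P t - P s) <= e /\ Rabs (Q t - Q s) <= e).
  { intros e He.
    destruct (tail_right g Hg (fun x => Rabs_pos _) Him (e * k / B)) as [N HN].
    apply Rdiv_lt_0_compat; nra.
    exists (Rmax N (M0 + 1)).
    assert (Hgen : forall s t, s <= t -> Rmax N (M0 + 1) <= s ->
               Rabs (P t - P s) <= e /\ Rabs (Q t - Q s) <= e).
    { intros s t Hst Ht.
      pose proof (Rmax_l N (M0 + 1)). pose proof (Rmax_r N (M0 + 1)).
      assert (HI : B / k * Int g Hg s t <= e).
      { specialize (HN s t ltac:(lra)).
        apply Rmult_le_compat_l with (r := B / k) in HN.
        replace (B / k * (e * k / B)) with e in HN by (field; lra). auto.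
        apply Rlt_le, Rdiv_lt_0_compat; lra. }
      destruct (Req_dec s t) as [E|Ne]. subst. rewrite !Rminus_diag, Rabs_R0. lra.
      destruct (Hpc s t ltac:(lra)) as [l [Hl1 Hl2]].
      split.
      - eapply Rle_trans; [|exact HI].
        apply (mono_abs P g Hg (B / k) l s t Hgl).
        apply Rlt_le, Rdiv_lt_0_compat; lra. lra.
        intros x _. apply (proj1 (PQ_cont u u' k x Hu1 Hu2)).
        intros x Hx Hn. assert (Hk2 : continuity_pt k2 x) by (apply Hl1; auto; lra).
        split. unfold g. apply Cabs. apply Cminus; auto. apply Cconst.
        eexists. split. apply (proj1 (PQ_deriv k2 u u' k x Hk (Hu1 x) (Hu3 x Hk2))).
        unfold g. rewrite Rabs_minus_sym. apply bnd_lemma; auto. apply HB; lra.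
        pose proof (SIN_bound (k*x)). apply Rabs_le; lra.
      - eapply Rle_trans; [|exact HI].
        apply (mono_abs Q g Hg (B / k) l s t Hgl).
        apply Rlt_le, Rdiv_lt_0_compat; lra. lra.
        intros x _. apply (proj2 (PQ_cont u u' k x Hu1 Hu2)).
        intros x Hx Hn. assert (Hk2 : continuity_pt k2 x) by (apply Hl1; auto; lra).
        split. unfold g. apply Cabs. apply Cminus; auto. apply Cconst.
        eexists. split. apply (proj2 (PQ_deriv k2 u u' k x Hk (Hu1 x) (Hu3 x Hk2))).
        unfold g. rewrite Rabs_minus_sym. apply bnd_lemma; auto. apply HB; lra.
        pose proof (COS_bound (k*x)). apply Rabs_le; lra. }
    intros s t Hs Ht. destruct (Rle_dec s t). apply Hgen; auto.
    rewrite (Rabs_minus_sym (P t)), (Rabs_minus_sym (Q t)). apply Hgen; auto; lra. }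
  intros eta Heta.
  set (e := eta / (8 * k)).
  assert (He : 0 < e) by (unfold e; apply Rdiv_lt_0_compat; lra).
  destruct (Hcau e He) as [N1 HN1].
  destruct (Has e He) as [N2 HN2].
  set (N3 := Rmax N1 N2 + 1).
  assert (HN3 : N3 = Rmax N1 N2 + 1) by reflexivity.
  pose proof (Rmax_l N1 N2). pose proof (Rmax_r N1 N2).
  destruct (INR_unbounded (Rabs N3 * k + 2)) as [n Hn].
  pose proof PI2_3_2. pose proof PI_4.
  set (s0 := (0 + 2 * INR n * PI) / k).
  set (s1 := (PI / 2 + 2 * INR n * PI) / k).
  assert (Hks0 : k * s0 = 0 + 2 * INR n * PI) by (unfold s0; field; lra).
  assert (Hks1 : k * s1 = PI/2 + 2 * INR n * PI) by (unfold s1; field; lra).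
  pose proof (Rabs_pos N3). pose proof (Rle_abs (- N3)) as RN3. rewrite Rabs_Ropp in RN3.
  pose proof (pos_INR n) as Pn.
  pose proof (Rle_abs N3) as RN4.
  assert (Kn : k * N3 <= k * Rabs N3) by nra.
  assert (Hs0 : N3 < s0).
  { apply (Rmult_lt_reg_l k); auto. rewrite Hks0. nra. }
  assert (Hs1 : N3 < s1).
  { apply (Rmult_lt_reg_l k); auto. rewrite Hks1. nra. }
  destruct (cos_sin_period_pos 0 n) as [C0 S0]. rewrite <- Hks0 in C0, S0. rewrite cos_0 in C0. rewrite sin_0 in S0.
  destruct (cos_sin_period_pos (PI/2) n) as [C1 S1]. rewrite <- Hks1 in C1, S1. rewrite cos_PI2 in C1. rewrite sin_PI2 in S1.
  assert (HP0 : Rabs (P s0 - al) < e).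
  { specialize (HN2 s0 ltac:(lra)). rewrite Rminus_0_r in HN2. rewrite C0, S0 in HN2.
    assert (E : P s0 = u s0) by (unfold P; rewrite C0, S0; ring). rewrite E.
    replace (al * 1 + be * 0) with al in HN2 by ring. exact HN2. }
  assert (HQ1 : Rabs (Q s1 - be) < e).
  { specialize (HN2 s1 ltac:(lra)). rewrite Rminus_0_r in HN2. rewrite C1, S1 in HN2.
    assert (E : Q s1 = u s1) by (unfold Q; rewrite C1, S1; ring). rewrite E.
    replace (al * 0 + be * 1) with be in HN2 by ring. exact HN2. }
  exists N3. intros t Ht.
  destruct (HN1 s0 t ltac:(lra) ltac:(lra)) as [A1 _].
  destruct (HN1 s1 t ltac:(lra) ltac:(lra)) as [_ A2].
  rewrite Rminus_0_r.
  assert (E : u' t = k * (- P t * sin (k * t) + Q t * cos (k * t))) by (unfold P, Q; apply PQ_id; auto).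
  rewrite E.
  replace (k * (- P t * sin (k * t) + Q t * cos (k * t)) - k * (- al * sin (k * t) + be * cos (k * t)))
    with (k * ((Q t - be) * cos (k * t) + (- (P t - al)) * sin (k * t))) by ring.
  rewrite Rabs_mult, (Rabs_right k) by lra.
  pose proof (abs_lin (Q t - be) (- (P t - al)) (k * t)) as X1. rewrite Rabs_Ropp in X1.
  pose proof (Rabs_triang (P t - P s0) (P s0 - al)) as X2. replace (P t - P s0 + (P s0 - al)) with (P t - al) in X2 by ring.
  pose proof (Rabs_triang (Q t - Q s1) (Q s1 - be)) as X3. replace (Q t - Q s1 + (Q s1 - be)) with (Q t - be) in X3 by ring.
  assert (k * (4 * e) < eta) by (unfold e; field_simplify; lra).
  nra.
Qed.


Section Main.
Variables k2 h h' ur ui ur' ui' : R -> R.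
Hypothesis Hpc : piecewise_continuous k2.
Hypothesis Hhpos : forall x, 0 < h x.
Hypothesis Hhd : forall x, derivable_pt_lim h x (h' x).
Hypothesis Hh'c : continuity h'.
Hypothesis Hu1 : forall x, derivable_pt_lim ur x (ur' x).
Hypothesis Hu2 : continuity ur'.
Hypothesis Hu3 : forall x, continuity_pt k2 x -> derivable_pt_lim ur' x (- k2 x * ur x).
Hypothesis Hv1 : forall x, derivable_pt_lim ui x (ui' x).
Hypothesis Hv2 : continuity ui'.
Hypothesis Hv3 : forall x, continuity_pt k2 x -> derivable_pt_lim ui' x (- k2 x * ui x).

Definition fint x := Rabs (h' x / h x) + Rabs (k2 x - h x ^ 2) / h x.

Lemma hcont x : continuity_pt h x.
Proof. eapply Dcont; apply Hhd. Qed.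

Lemma fint_pc : piecewise_continuous fint.
Proof.
  replace fint with (compo (fun x => h' x / h x) (fun x => h x ^ 2) (fun x => / h x) k2).
  apply compo_pc; auto.
  intro x. apply Cdiv. apply Hh'c. apply hcont. pose proof (Hhpos x); lra.
  intro x. apply Cpow. apply hcont.
  intro x. apply Cinv. apply hcont. pose proof (Hhpos x); lra.
  apply functional_extensionality; intro; unfold compo, fint; unfold Rdiv; reflexivity.
Qed.

Definition HfI := PCI fint fint_pc.
Lemma fint_loc : Hloc_def fint.
Proof. apply pc_loc, fint_pc. Qed.

Lemma fint_cont x : continuity_pt k2 x -> continuity_pt fint x.
Proof.
  intros Hk. unfold fint. pose proof (Hhpos x).
  apply Cplus. apply Cabs. apply Cdiv. apply Hh'c. apply hcont. lra.
  apply Cdiv. apply Cabs. apply Cminus. auto. apply Cpow. apply hcont. apply hcont. lra.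
Qed.

Definition W x := ur x * ui' x - ui x * ur' x.

Lemma W_const x y : W x = W y.
Proof.
  assert (Hgen : forall x y, x < y -> W x = W y).
  { clear x y. intros x y Hxy. destruct (Hpc x y Hxy) as [l [Hl1 Hl2]].
    assert (A : Rabs (W y - W x) <= 0 * Int fint HfI x y).
    { apply (mono_abs W fint HfI 0 l x y fint_loc). lra. lra.
      intros z _. unfold W. apply Cminus; apply Cmult.
      apply (Dcont _ _ _ (Hu1 z)). apply Hv2. apply (Dcont _ _ _ (Hv1 z)). apply Hu2.
      intros z Hz Hn. assert (Hk : continuity_pt k2 z) by (apply Hl1; auto; lra).
      split. apply fint_cont; auto.
      exists 0. split. eapply Deq. unfold W. apply Dminus; apply Dmult; eauto.
      ring. rewrite Rabs_R0. lra. }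
    rewrite Rmult_0_l in A. pose proof (Rabs_pos (W y - W x)).
    assert (Rabs (W y - W x) = 0) by lra. 
    destruct (Req_dec (W y - W x) 0). lra. apply Rabs_no_R0 in H1. lra. }
  destruct (Rtotal_order x y) as [H|[H|H]]; auto. subst; auto. symmetry; auto.
Qed.

Definition E x := (h x * (ur x * ur x + ui x * ui x) + (ur' x * ur' x + ui' x * ui' x) / h x) / 2.
Definition Rr x := ur x * ur' x + ui x * ui' x.
Definition Dd x := (h x * (ur x * ur x + ui x * ui x) - (ur' x * ur' x + ui' x * ui' x) / h x) / 2.

Lemma E_id x : E x * E x = Rr x * Rr x + Dd x * Dd x + W x * W x.
Proof. unfold E, Rr, Dd, W. pose proof (Hhpos x). field. lra. Qed.

Lemma E_nonneg x : 0 <= E x.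
Proof.
  unfold E. pose proof (Hhpos x).
  assert (0 <= (ur' x * ur' x + ui' x * ui' x) / h x).
  { unfold Rdiv. apply Rmult_le_pos. nra. apply Rlt_le, Rinv_0_lt_compat; auto. }
  nra.
Qed.

Lemma E_cont x : continuity_pt E x.
Proof.
  unfold E. pose proof (Hhpos x).
  assert (C1 : continuity_pt ur x) by (eapply Dcont; eauto).
  assert (C2 : continuity_pt ui x) by (eapply Dcont; eauto).
  apply Cdiv; [|apply Cconst|lra].
  apply Cplus. apply Cmult. apply hcont. apply Cplus; apply Cmult; auto.
  apply Cdiv. apply Cplus; apply Cmult; auto. apply hcont. lra.
Qed.

Lemma E_deriv x : continuity_pt k2 x ->
  derivable_pt_lim E x (h' x / h x * Dd x + (h x ^ 2 - k2 x) / h x * Rr x).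
Proof.
  intros Hk. pose proof (Hhpos x). unfold E.
  eapply Deq. apply Ddiv; [|apply Dconst|lra].
  apply Dplus. apply Dmult. apply Hhd. apply Dplus; apply Dmult; eauto.
  apply Ddiv. apply Dplus; apply Dmult; eauto. apply Hhd. lra.
  cbv beta. unfold Dd, Rr, Rsqr. field. lra.
Qed.

Definition Gf eps w x := ln (E x + eps + sqrt ((E x + eps) * (E x + eps) - w * w)).

Lemma sq_le_abs a b : a * a <= b * b -> 0 <= b -> Rabs a <= b.
Proof.
  intros. destruct (Rle_dec (Rabs a) b); auto. exfalso.
  assert (b < Rabs a) by lra. assert (b * b < Rabs a * Rabs a) by nra.
  rewrite <- Rabs_mult in H2. rewrite Rabs_right in H2. lra.
  apply Rle_ge. nra.
Qed.

Lemma G_bound eps x y : 0 < eps -> x <= y ->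
  Rabs (Gf eps (W 0) y - Gf eps (W 0) x) <= Int fint HfI x y.
Proof.
  intros Heps Hxy.
  set (w := W 0).
  assert (Hw : forall z, w * w <= E z * E z).
  { intro z. unfold w. rewrite (W_const 0 z). rewrite E_id. nra. }
  assert (Harg : forall z, 0 < (E z + eps) * (E z + eps) - w * w).
  { intro z. pose proof (Hw z). pose proof (E_nonneg z). nra. }
  assert (HS : forall z, 0 < sqrt ((E z + eps) * (E z + eps) - w * w)).
  { intro z. apply sqrt_lt_R0. auto. }
  assert (HG0 : forall z, 0 < E z + eps + sqrt ((E z + eps) * (E z + eps) - w * w)).
  { intro z. pose proof (HS z). pose proof (E_nonneg z). lra. }
  destruct (Req_dec x y) as [->|Hne].
  { rewrite Rminus_diag, Rabs_R0, Int_refl. lra. }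
  destruct (Hpc x y ltac:(lra)) as [l [Hl1 Hl2]].
  replace (Int fint HfI x y) with (1 * Int fint HfI x y) by ring.
  apply (mono_abs (Gf eps w) fint HfI 1 l x y fint_loc). lra. lra.
  - intros z _. unfold Gf. apply Cln; auto.
    apply Cplus. apply Cplus. apply E_cont. apply Cconst.
    apply Csqrt. apply Cminus. apply Cmult; apply Cplus; try apply E_cont; apply Cconst. apply Cconst.
    left; auto.
  - intros z Hz Hn. assert (Hk : continuity_pt k2 z) by (apply Hl1; auto; lra).
    split. apply fint_cont; auto.
    eexists. split. unfold Gf. apply Dln; auto.
    apply Dplus. apply Dplus. apply E_deriv; auto. apply Dconst.
    apply Dsqrt; auto. apply Dminus. apply Dmult; apply Dplus; try apply E_deriv; auto; apply Dconst.
    apply Dconst.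
    cbv beta. set (S := sqrt ((E z + eps) * (E z + eps) - w * w)).
    set (E' := h' z / h z * Dd z + (h z ^ 2 - k2 z) / h z * Rr z).
    assert (HSpos : 0 < S) by apply HS.
    assert (HSS : S * S = (E z + eps) * (E z + eps) - w * w) by (apply sqrt_sqrt; left; auto).
    pose proof (HG0 z) as HG. fold S in HG.
    replace (/ (E z + eps + S) * (E' + 0 + / (2 * S) * ((E' + 0) * (E z + eps) + (E z + eps) * (E' + 0) - 0)))
      with (E' / S) by (field; lra).
    assert (HE := E_id z). rewrite <- (W_const 0 z) in HE. fold w in HE.
    pose proof (E_nonneg z).
    assert (HR : Rabs (Rr z) <= S) by (apply sq_le_abs; nra).
    assert (HD : Rabs (Dd z) <= S) by (apply sq_le_abs; nra).
    assert (HE' : Rabs E' <= fint z * S).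
    { unfold E', fint. pose proof (Hhpos z).
      eapply Rle_trans. apply Rabs_triang. rewrite !Rabs_mult.
      replace (Rabs ((h z ^ 2 - k2 z) / h z)) with (Rabs (k2 z - h z ^ 2) / h z).
      pose proof (Rabs_pos (h' z / h z)). 
      assert (0 <= Rabs (k2 z - h z ^ 2) / h z).
      { unfold Rdiv. apply Rmult_le_pos. apply Rabs_pos. apply Rlt_le, Rinv_0_lt_compat; auto. }
      nra.
      unfold Rdiv. rewrite Rabs_mult, Rabs_inv, (Rabs_right (h z)) by lra.
      rewrite Rabs_minus_sym. reflexivity. }
    unfold Rdiv. rewrite Rabs_mult, Rabs_inv, (Rabs_right S) by lra.
    apply (Rmult_le_reg_r S); auto. rewrite Rmult_assoc, Rinv_l by lra. lra.
Qed.
End Main.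


Lemma prod_err a b a0 b0 d K : Rabs (a - a0) <= d -> Rabs (b - b0) <= d -> Rabs a0 <= K -> Rabs b0 <= K ->
  Rabs (a * b - a0 * b0) <= d * (2 * K + d).
Proof.
  intros H1 H2 H3 H4.
  replace (a * b - a0 * b0) with ((a - a0) * (b - b0) + (a - a0) * b0 + a0 * (b - b0)) by ring.
  eapply Rle_trans. apply Rabs_triang. eapply Rle_trans. apply Rplus_le_compat_r. apply Rabs_triang.
  rewrite !Rabs_mult.
  pose proof (Rabs_pos (a - a0)). pose proof (Rabs_pos (b - b0)). pose proof (Rabs_pos a0). pose proof (Rabs_pos b0).
  assert (Rabs (a - a0) * Rabs (b - b0) <= d * d) by (apply Rmult_le_compat; auto).
  assert (Rabs (a - a0) * Rabs b0 <= d * K) by (apply Rmult_le_compat; auto).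
  assert (Rabs a0 * Rabs (b - b0) <= K * d) by (apply Rmult_le_compat; auto).
  nra.
Qed.

Lemma zero_lemma A B C : (forall d, 0 < d -> d <= 1 -> Rabs (A - B) <= C * d) -> A = B.
Proof.
  intros H. destruct (Req_dec A B); auto. exfalso.
  assert (HD : 0 < Rabs (A - B)) by (apply Rabs_pos_lt; lra).
  set (d := Rmin 1 (Rabs (A - B) / (2 * (Rabs C + 1)))).
  pose proof (Rabs_pos C).
  assert (Hd : 0 < d) by (apply Rmin_pos; [lra| apply Rdiv_lt_0_compat; lra]).
  assert (Hd1 : d <= 1) by apply Rmin_l.
  assert (Hd2 : d <= Rabs (A - B) / (2 * (Rabs C + 1))) by apply Rmin_r.
  specialize (H d Hd Hd1).
  assert (d * (2 * (Rabs C + 1)) <= Rabs (A - B)).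
  { apply (Rmult_le_compat_r (2 * (Rabs C + 1))) in Hd2; [|lra].
    unfold Rdiv in Hd2. rewrite Rmult_assoc, Rinv_l in Hd2 by lra. lra. }
  pose proof (Rle_abs C). nra.
Qed.

Lemma lim_minf_ext f g L : (forall x, f x = g x) -> lim_minf f L -> lim_minf g L.
Proof. intros E H eps He. destruct (H eps He) as [M HM]. exists M. intros. rewrite <- E; auto. Qed.
Lemma lim_pinf_ext f g L : (forall x, f x = g x) -> lim_pinf f L -> lim_pinf g L.
Proof. intros E H eps He. destruct (H eps He) as [M HM]. exists M. intros. rewrite <- E; auto. Qed.

Lemma final_alg K W0 A : 0 <= W0 -> 1 <= A ->
  (forall eta t, 0 < eta -> 0 < t -> t <= 1 -> K - eta <= A * (W0 + t + sqrt ((W0 + t) * (W0 + t) - W0 * W0))) ->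
  K <= A * W0.
Proof.
  intros HW HA H. destruct (Rle_dec K (A * W0)); auto. exfalso.
  set (D := K - A * W0). assert (HD : 0 < D) by (unfold D; lra).
  set (del := D / (4 * A)).
  assert (Hdel : 0 < del) by (unfold del; apply Rdiv_lt_0_compat; lra).
  set (t := Rmin 1 (Rmin del (del * del / (2 * W0 + 1)))).
  assert (Ht : 0 < t). { unfold t. apply Rmin_pos. lra. apply Rmin_pos; auto. apply Rdiv_lt_0_compat; nra. }
  assert (Ht1 : t <= 1) by apply Rmin_l.
  assert (Ht2 : t <= del) by (eapply Rle_trans; [apply Rmin_r|apply Rmin_l]).
  assert (Ht3 : t <= del * del / (2 * W0 + 1)) by (eapply Rle_trans; [apply Rmin_r|apply Rmin_r]).
  assert (Hsq : sqrt ((W0 + t) * (W0 + t) - W0 * W0) <= del).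
  { rewrite <- (sqrt_Rsqr del) by lra. apply sqrt_le_1_alt. unfold Rsqr.
    assert (t * (2 * W0 + 1) <= del * del).
    { apply (Rmult_le_compat_r (2 * W0 + 1)) in Ht3; [|lra].
      unfold Rdiv in Ht3. rewrite Rmult_assoc, Rinv_l in Ht3 by lra. lra. }
    nra. }
  specialize (H t t Ht Ht Ht1).
  assert (A * del = D / 4) by (unfold del; field; lra).
  assert (A * (W0 + t + sqrt ((W0 + t) * (W0 + t) - W0 * W0)) <= A * W0 + D / 2).
  { assert (W0 + t + sqrt ((W0 + t) * (W0 + t) - W0 * W0) <= W0 + 2 * del) by lra.
    apply (Rmult_le_compat_l A) in H1; lra. }
  assert (t <= D / 4).
  { unfold del in Ht2.
    assert (D / (4 * A) <= D / 4).
    { unfold Rdiv. apply Rmult_le_compat_l. lra. apply Rinv_le_contravar; lra. }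
    lra. }
  unfold D in *. lra.
Qed.

Lemma sech_alg I r : 0 <= r -> (1 + r) * (1 + r) <= exp I * (1 - r * r) ->
  Rsqr (sech (I / 2)) <= 1 - r * r.
Proof.
  intros Hr H.
  set (a := exp (I / 2)). assert (Ha : 0 < a) by apply exp_pos.
  assert (E1 : exp I = a * a) by (unfold a; rewrite <- exp_plus; f_equal; field).
  assert (E2 : exp (- (I / 2)) = / a) by (unfold a; apply exp_Ropp).
  assert (Hs : sech (I / 2) = 2 * a / (a * a + 1)).
  { unfold sech, cosh. rewrite E2. fold a.
    assert (a * a + 1 <> 0) by (apply Rgt_not_eq; nra).
    assert (a <> 0) by lra.
    assert (a * a + 1 = a * (a + / a)) by (field; auto).
    assert (a + / a <> 0). { intro Z. rewrite Z in H2. lra. }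
    field. auto. }
  rewrite Hs. rewrite E1 in H. set (s := a * a) in *.
  assert (Hs0 : 0 < s) by (unfold s; nra).
  assert (Hr1 : r < 1).
  { destruct (Rlt_dec r 1); auto. assert (1 - r * r <= 0) by nra.
    assert (s * (1 - r * r) <= 0) by (assert (0 <= s * (r * r - 1)) by (apply Rmult_le_pos; lra); lra). nra. }
  assert (Hp : r * (s + 1) <= s - 1) by nra.
  unfold Rsqr.
  replace (2 * a / (s + 1) * (2 * a / (s + 1))) with (4 * s / ((s + 1) * (s + 1))) by (unfold s; field; apply Rgt_not_eq; nra).
  apply (Rmult_le_reg_r ((s + 1) * (s + 1))). nra.
  unfold Rdiv. rewrite Rmult_assoc, Rinv_l by nra.
  assert (0 <= r * (s + 1)) by nra.
  nra.
Qed.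


Lemma four_minf f1 f2 f3 f4 : lim_minf f1 0 -> lim_minf f2 0 -> lim_minf f3 0 -> lim_minf f4 0 ->
  forall d, 0 < d -> exists N, forall x, x < N ->
    Rabs (f1 x) < d /\ Rabs (f2 x) < d /\ Rabs (f3 x) < d /\ Rabs (f4 x) < d.
Proof.
  intros H1 H2 H3 H4 d Hd.
  destruct (H1 d Hd) as [N1 A1]. destruct (H2 d Hd) as [N2 A2].
  destruct (H3 d Hd) as [N3 A3]. destruct (H4 d Hd) as [N4 A4].
  exists (Rmin (Rmin N1 N2) (Rmin N3 N4)). intros x Hx.
  pose proof (Rmin_l (Rmin N1 N2) (Rmin N3 N4)). pose proof (Rmin_r (Rmin N1 N2) (Rmin N3 N4)).
  pose proof (Rmin_l N1 N2). pose proof (Rmin_r N1 N2). pose proof (Rmin_l N3 N4). pose proof (Rmin_r N3 N4).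
  specialize (A1 x ltac:(lra)). specialize (A2 x ltac:(lra)). specialize (A3 x ltac:(lra)). specialize (A4 x ltac:(lra)).
  rewrite Rminus_0_r in *. auto.
Qed.
Lemma four_pinf f1 f2 f3 f4 : lim_pinf f1 0 -> lim_pinf f2 0 -> lim_pinf f3 0 -> lim_pinf f4 0 ->
  forall d, 0 < d -> exists N, forall x, N < x ->
    Rabs (f1 x) < d /\ Rabs (f2 x) < d /\ Rabs (f3 x) < d /\ Rabs (f4 x) < d.
Proof.
  intros H1 H2 H3 H4 d Hd.
  destruct (H1 d Hd) as [N1 A1]. destruct (H2 d Hd) as [N2 A2].
  destruct (H3 d Hd) as [N3 A3]. destruct (H4 d Hd) as [N4 A4].
  exists (Rmax (Rmax N1 N2) (Rmax N3 N4)). intros x Hx.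
  pose proof (Rmax_l (Rmax N1 N2) (Rmax N3 N4)). pose proof (Rmax_r (Rmax N1 N2) (Rmax N3 N4)).
  pose proof (Rmax_l N1 N2). pose proof (Rmax_r N1 N2). pose proof (Rmax_l N3 N4). pose proof (Rmax_r N3 N4).
  specialize (A1 x ltac:(lra)). specialize (A2 x ltac:(lra)). specialize (A3 x ltac:(lra)). specialize (A4 x ltac:(lra)).
  rewrite Rminus_0_r in *. auto.
Qed.

Lemma abs_lin2 k a b c : 0 < k -> Rabs (k * (- a * sin c + b * cos c)) <= k * (Rabs a + Rabs b).
Proof.
  intros Hk. rewrite Rabs_mult, (Rabs_right k) by lra.
  apply Rmult_le_compat_l. lra.
  replace (- a * sin c + b * cos c) with (b * cos c + (- a) * sin c) by ring.
  eapply Rle_trans. apply abs_lin. rewrite Rabs_Ropp. lra.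
Qed.

Section Left.
Variables km rr ri : R.
Variables ur ur' ui ui' : R -> R.
Hypothesis Hkm : 0 < km.
Hypothesis Har : lim_minf (fun x => ur x - ((1 + rr) * cos (km * x) + ri * sin (km * x))) 0.
Hypothesis Har' : lim_minf (fun x => ur' x - km * (- (1 + rr) * sin (km * x) + ri * cos (km * x))) 0.
Hypothesis Hai : lim_minf (fun x => ui x - (ri * cos (km * x) + (1 - rr) * sin (km * x))) 0.
Hypothesis Hai' : lim_minf (fun x => ui' x - km * (- ri * sin (km * x) + (1 - rr) * cos (km * x))) 0.

Definition KL := (Rabs (1 + rr) + Rabs ri) + (Rabs ri + Rabs (1 - rr)) +
   km * (Rabs (1 + rr) + Rabs ri) + km * (Rabs ri + Rabs (1 - rr)).

Lemma left_bounds x :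
  Rabs ((1 + rr) * cos (km * x) + ri * sin (km * x)) <= KL /\
  Rabs (km * (- (1 + rr) * sin (km * x) + ri * cos (km * x))) <= KL /\
  Rabs (ri * cos (km * x) + (1 - rr) * sin (km * x)) <= KL /\
  Rabs (km * (- ri * sin (km * x) + (1 - rr) * cos (km * x))) <= KL.
Proof.
  unfold KL. pose proof (Rabs_pos (1 + rr)). pose proof (Rabs_pos ri). pose proof (Rabs_pos (1 - rr)).
  assert (0 <= km * (Rabs (1 + rr) + Rabs ri)) by nra.
  assert (0 <= km * (Rabs ri + Rabs (1 - rr))) by nra.
  pose proof (abs_lin (1 + rr) ri (km * x)).
  pose proof (abs_lin ri (1 - rr) (km * x)).
  pose proof (abs_lin2 km (1 + rr) ri (km * x) Hkm).
  pose proof (abs_lin2 km ri (1 - rr) (km * x) Hkm).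
  repeat split; lra.
Qed.

Lemma left_W w : (forall x, ur x * ui' x - ui x * ur' x = w) -> w = km * (1 - (rr * rr + ri * ri)).
Proof.
  intros HW. apply (zero_lemma _ _ (2 * (2 * KL + 1))). intros d Hd Hd1.
  destruct (four_minf _ _ _ _ Har Har' Hai Hai' d Hd) as [N HN].
  destruct (HN (N - 1) ltac:(lra)) as [A1 [A2 [A3 A4]]].
  destruct (left_bounds (N - 1)) as [B1 [B2 [B3 B4]]].
  set (x := N - 1) in *.
  pose proof (prod_err _ _ _ _ d KL (Rlt_le _ _ A1) (Rlt_le _ _ A4) B1 B4) as P1.
  pose proof (prod_err _ _ _ _ d KL (Rlt_le _ _ A3) (Rlt_le _ _ A2) B3 B2) as P2.
  rewrite <- (HW x).
  set (c := cos (km * x)) in *. set (s := sin (km * x)) in *.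
  assert (Hcs : s * s + c * c = 1) by (pose proof (sin2_cos2 (km * x)); unfold Rsqr in H; auto).
  replace (km * (1 - (rr * rr + ri * ri))) with
    (((1 + rr) * c + ri * s) * (km * (- ri * s + (1 - rr) * c)) -
     (ri * c + (1 - rr) * s) * (km * (- (1 + rr) * s + ri * c))).
  2: { transitivity (km * (1 - (rr * rr + ri * ri)) * (s * s + c * c)). ring. rewrite Hcs; ring. }
  match goal with |- Rabs (?A - ?B - (?C - ?D)) <= _ => 
    replace (A - B - (C - D)) with ((A - C) - (B - D)) by ring end.
  eapply Rle_trans. apply Rabs_triang. rewrite Rabs_Ropp.
  assert (d * (2 * KL + d) <= d * (2 * KL + 1)) by nra.
  lra.
Qed.

Lemma left_R d : 0 < d -> exists x,
  2 * km * sqrt (rr * rr + ri * ri) - d <= ur x * ur' x + ui x * ui' x.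
Proof.
  intros Hd.
  set (rho := sqrt (rr * rr + ri * ri)).
  assert (Hrho : rho * rho = rr * rr + ri * ri) by (apply sqrt_sqrt; nra).
  assert (Hrho0 : 0 <= rho) by apply sqrt_pos.
  clearbody rho.
  assert (Hphi : exists phi, rho * cos phi = ri /\ rho * sin phi = - rr).
  { destruct (Req_dec rho 0) as [Z|NZ].
    - exists 0. assert (rr = 0 /\ ri = 0) by (rewrite Z in Hrho; split; nra).
      destruct H; subst. split; ring.
    - assert (0 < rho) by lra.
      assert (Hb : -1 <= ri / rho <= 1).
      { split; apply (Rmult_le_reg_r rho); auto; unfold Rdiv; rewrite Rmult_assoc, Rinv_l by lra; nra. }
      assert (Hs : sqrt (1 - (ri / rho)²) = Rabs rr / rho).
      { replace (1 - (ri / rho)²) with (Rsqr (Rabs rr / rho)).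
        apply sqrt_Rsqr. apply Rmult_le_pos. apply Rabs_pos. apply Rlt_le, Rinv_0_lt_compat; auto.
        unfold Rsqr.
        assert (AA : Rabs rr * Rabs rr = rr * rr) by (rewrite <- Rabs_mult; apply Rabs_right; nra).
        assert (NZ2 : rr * rr + ri * ri <> 0) by (rewrite <- Hrho; apply Rgt_not_eq; nra).
        replace (Rabs rr / rho * (Rabs rr / rho)) with ((Rabs rr * Rabs rr) / (rho * rho)) by (field; lra).
        rewrite AA. replace (1 - ri / rho * (ri / rho)) with ((rho * rho - ri * ri) / (rho * rho)) by (field; lra). rewrite Hrho. field. auto. }
      destruct (Rle_dec rr 0).
      + exists (acos (ri / rho)). rewrite cos_acos, sin_acos by auto. rewrite Hs.
        rewrite Rabs_left1 by auto. split; field; lra.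
      + exists (- acos (ri / rho)). rewrite cos_neg, sin_neg, cos_acos, sin_acos by auto. rewrite Hs.
        rewrite Rabs_right by lra. split; field; lra. }
  destruct Hphi as [phi [Hc Hs]].
  set (e := d / (2 * (2 * KL + 1))).
  assert (He : 0 < e) by (unfold e; apply Rdiv_lt_0_compat; unfold KL;
     pose proof (Rabs_pos (1 + rr)); pose proof (Rabs_pos ri); pose proof (Rabs_pos (1 - rr)); nra).
  set (e' := Rmin e 1).
  assert (He' : 0 < e') by (apply Rmin_pos; lra).
  destruct (four_minf _ _ _ _ Har Har' Hai Hai' e' He') as [N HN].
  destruct (INR_unbounded (Rabs N * km + Rabs phi + 2)) as [n Hn].
  pose proof PI2_3_2. pose proof (pos_INR n).
  set (x := (phi / 2 - INR n * PI) / km).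
  assert (Hx2 : 2 * (km * x) = phi - 2 * INR n * PI) by (unfold x; field; lra).
  assert (HxN : x < N).
  { apply (Rmult_lt_reg_l km); auto. unfold x. replace (km * ((phi / 2 - INR n * PI) / km)) with (phi / 2 - INR n * PI) by (field; lra).
    pose proof (Rle_abs phi). pose proof (Rle_abs (- N)) as RN. rewrite Rabs_Ropp in RN. pose proof (Rabs_pos N). assert (km * N >= - (km * Rabs N)) by nra. assert (0 <= (PI - 3) * INR n) by (apply Rmult_le_pos; lra). assert (0 <= Rabs N * km) by (apply Rmult_le_pos; lra). pose proof (Rabs_pos phi). lra. }
  exists x.
  destruct (HN x HxN) as [A1 [A2 [A3 A4]]].
  destruct (left_bounds x) as [B1 [B2 [B3 B4]]].
  assert (e' <= 1) by apply Rmin_r. assert (e' <= e) by apply Rmin_l.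
  pose proof (prod_err _ _ _ _ e' KL (Rlt_le _ _ A1) (Rlt_le _ _ A2) B1 B2) as P1.
  pose proof (prod_err _ _ _ _ e' KL (Rlt_le _ _ A3) (Rlt_le _ _ A4) B3 B4) as P2.
  destruct (cos_sin_period_neg phi n) as [C1 S1]. rewrite <- Hx2 in C1, S1.
  rewrite sin_2a in S1. rewrite cos_2a in C1.
  set (c := cos (km * x)) in *. set (s := sin (km * x)) in *.
  assert (Hg : ((1 + rr) * c + ri * s) * (km * (- (1 + rr) * s + ri * c)) +
               (ri * c + (1 - rr) * s) * (km * (- ri * s + (1 - rr) * c)) = 2 * km * rho).
  { transitivity (km * (- 2 * rr * (2 * s * c) + 2 * ri * (c * c - s * s))). ring.
    rewrite S1, C1.
    destruct (Req_dec rho 0) as [Z|NZ].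
    - rewrite Z in Hrho. assert (Z1 : rr = 0) by nra. assert (Z2 : ri = 0) by nra. rewrite Z1, Z2, Z. ring.
    - apply (Rmult_eq_reg_l rho); auto.
      transitivity (km * (- 2 * rr * (rho * sin phi) + 2 * ri * (rho * cos phi))). ring.
      rewrite Hc, Hs. transitivity (2 * km * (rr * rr + ri * ri)). ring. rewrite <- Hrho. ring. }
  assert (E1 : e' * (2 * KL + e') <= e * (2 * KL + 1)).
  { assert (HKL : 0 <= KL) by (unfold KL; pose proof (Rabs_pos (1 + rr)); pose proof (Rabs_pos ri); pose proof (Rabs_pos (1 - rr)); nra).
    assert (0 <= (e - e') * KL) by (apply Rmult_le_pos; lra).
    assert (e' * e' <= e' * 1) by (apply Rmult_le_compat_l; lra). nra. }
  assert (E2 : 2 * (e * (2 * KL + 1)) = d) by (unfold e; field; unfold KL;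
     pose proof (Rabs_pos (1 + rr)); pose proof (Rabs_pos ri); pose proof (Rabs_pos (1 - rr)); nra).
  apply abs_le_b in P1. apply abs_le_b in P2. lra.
Qed.
End Left.


Section Right.
Variables kp tr ti : R.
Variables ur ur' ui ui' : R -> R.
Hypothesis Hkp : 0 < kp.
Hypothesis Har : lim_pinf (fun x => ur x - (tr * cos (kp * x) + - ti * sin (kp * x))) 0.
Hypothesis Har' : lim_pinf (fun x => ur' x - kp * (- tr * sin (kp * x) + - ti * cos (kp * x))) 0.
Hypothesis Hai : lim_pinf (fun x => ui x - (ti * cos (kp * x) + tr * sin (kp * x))) 0.
Hypothesis Hai' : lim_pinf (fun x => ui' x - kp * (- ti * sin (kp * x) + tr * cos (kp * x))) 0.

Definition KR := (Rabs tr + Rabs (- ti)) + (Rabs ti + Rabs tr) +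
   kp * (Rabs tr + Rabs (- ti)) + kp * (Rabs ti + Rabs tr).

Lemma KR_pos : 0 <= KR.
Proof. unfold KR. pose proof (Rabs_pos tr). pose proof (Rabs_pos ti). pose proof (Rabs_pos (- ti)). nra. Qed.

Lemma right_bounds x :
  Rabs (tr * cos (kp * x) + - ti * sin (kp * x)) <= KR /\
  Rabs (kp * (- tr * sin (kp * x) + - ti * cos (kp * x))) <= KR /\
  Rabs (ti * cos (kp * x) + tr * sin (kp * x)) <= KR /\
  Rabs (kp * (- ti * sin (kp * x) + tr * cos (kp * x))) <= KR.
Proof.
  unfold KR. pose proof (Rabs_pos tr). pose proof (Rabs_pos ti). pose proof (Rabs_pos (- ti)).
  assert (0 <= kp * (Rabs tr + Rabs (- ti))) by nra.
  assert (0 <= kp * (Rabs ti + Rabs tr)) by nra.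
  pose proof (abs_lin tr (- ti) (kp * x)).
  pose proof (abs_lin ti tr (kp * x)).
  pose proof (abs_lin2 kp tr (- ti) (kp * x) Hkp).
  pose proof (abs_lin2 kp ti tr (kp * x) Hkp).
  repeat split; lra.
Qed.

Lemma right_W w : (forall x, ur x * ui' x - ui x * ur' x = w) -> w = kp * (tr * tr + ti * ti).
Proof.
  intros HW. apply (zero_lemma _ _ (2 * (2 * KR + 1))). intros d Hd Hd1.
  destruct (four_pinf _ _ _ _ Har Har' Hai Hai' d Hd) as [N HN].
  destruct (HN (N + 1) ltac:(lra)) as [A1 [A2 [A3 A4]]].
  destruct (right_bounds (N + 1)) as [B1 [B2 [B3 B4]]].
  set (x := N + 1) in *.
  pose proof (prod_err _ _ _ _ d KR (Rlt_le _ _ A1) (Rlt_le _ _ A4) B1 B4) as P1.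
  pose proof (prod_err _ _ _ _ d KR (Rlt_le _ _ A3) (Rlt_le _ _ A2) B3 B2) as P2.
  rewrite <- (HW x).
  set (c := cos (kp * x)) in *. set (s := sin (kp * x)) in *.
  assert (Hcs : s * s + c * c = 1) by (pose proof (sin2_cos2 (kp * x)); unfold Rsqr in H; auto).
  replace (kp * (tr * tr + ti * ti)) with
    ((tr * c + - ti * s) * (kp * (- ti * s + tr * c)) -
     (ti * c + tr * s) * (kp * (- tr * s + - ti * c))).
  2: { transitivity (kp * (tr * tr + ti * ti) * (s * s + c * c)). ring. rewrite Hcs; ring. }
  match goal with |- Rabs (?A - ?B - (?C - ?D)) <= _ =>
    replace (A - B - (C - D)) with ((A - C) - (B - D)) by ring end.
  eapply Rle_trans. apply Rabs_triang. rewrite Rabs_Ropp.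
  assert (d * (2 * KR + d) <= d * (2 * KR + 1)) by nra.
  lra.
Qed.

Lemma right_NM d N0 : 0 < d -> exists N, N0 < N /\ forall y, N < y ->
  Rabs (ur y * ur y + ui y * ui y - (tr * tr + ti * ti)) <= d /\
  Rabs (ur' y * ur' y + ui' y * ui' y - kp * kp * (tr * tr + ti * ti)) <= d.
Proof.
  intros Hd.
  pose proof KR_pos.
  set (e := Rmin 1 (d / (2 * (2 * KR + 1)))).
  assert (He : 0 < e) by (apply Rmin_pos; [lra|apply Rdiv_lt_0_compat; lra]).
  assert (He1 : e <= 1) by apply Rmin_l.
  assert (He2 : e <= d / (2 * (2 * KR + 1))) by apply Rmin_r.
  assert (He3 : 2 * (e * (2 * KR + e)) <= d).
  { assert (e * (2 * (2 * KR + 1)) <= d).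
    { apply (Rmult_le_compat_r (2 * (2 * KR + 1))) in He2; [|lra].
      unfold Rdiv in He2. rewrite Rmult_assoc, Rinv_l in He2 by lra. lra. }
    nra. }
  destruct (four_pinf _ _ _ _ Har Har' Hai Hai' e He) as [N HN].
  exists (Rmax N N0 + 1). split. pose proof (Rmax_r N N0); lra.
  intros y Hy. pose proof (Rmax_l N N0).
  destruct (HN y ltac:(lra)) as [A1 [A2 [A3 A4]]].
  destruct (right_bounds y) as [B1 [B2 [B3 B4]]].
  pose proof (prod_err _ _ _ _ e KR (Rlt_le _ _ A1) (Rlt_le _ _ A1) B1 B1) as P1.
  pose proof (prod_err _ _ _ _ e KR (Rlt_le _ _ A3) (Rlt_le _ _ A3) B3 B3) as P2.
  pose proof (prod_err _ _ _ _ e KR (Rlt_le _ _ A2) (Rlt_le _ _ A2) B2 B2) as P3.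
  pose proof (prod_err _ _ _ _ e KR (Rlt_le _ _ A4) (Rlt_le _ _ A4) B4 B4) as P4.
  set (c := cos (kp * y)) in *. set (s := sin (kp * y)) in *.
  assert (Hcs : s * s + c * c = 1) by (pose proof (sin2_cos2 (kp * y)); unfold Rsqr in H1; auto).
  apply abs_le_b in P1. apply abs_le_b in P2. apply abs_le_b in P3. apply abs_le_b in P4.
  split; apply Rabs_le.
  - assert (E1 : (tr * c + - ti * s) * (tr * c + - ti * s) + (ti * c + tr * s) * (ti * c + tr * s) = tr * tr + ti * ti).
    { transitivity ((tr * tr + ti * ti) * (s * s + c * c)). ring. rewrite Hcs; ring. }
    lra.
  - assert (E1 : kp * (- tr * s + - ti * c) * (kp * (- tr * s + - ti * c)) + kp * (- ti * s + tr * c) * (kp * (- ti * s + tr * c)) = kp * kp * (tr * tr + ti * ti)).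
    { transitivity (kp * kp * (tr * tr + ti * ti) * (s * s + c * c)). ring. rewrite Hcs; ring. }
    lra.
Qed.
End Right.


Lemma Int_lower f H a b l : a <= b -> (forall x, a < x < b -> l <= f x) -> l * (b - a) <= Int f H a b.
Proof.
  intros. unfold Int. rewrite <- (RiemannInt_P15 (RiemannInt_P14 a b l)).
  apply RiemannInt_P19; auto.
Qed.

Lemma h_close k2y hy kp d : 0 < kp -> 0 < hy -> Rabs (k2y - kp ^ 2) < d -> Rabs (k2y - hy ^ 2) / hy < d ->
  Rabs (hy - kp) <= d * (1 + / kp).
Proof.
  intros Hkp Hh H1 H2.
  assert (H3 : Rabs (k2y - hy ^ 2) < d * hy).
  { apply (Rmult_lt_compat_r hy) in H2; auto. unfold Rdiv in H2. rewrite Rmult_assoc, Rinv_l in H2 by lra. lra. }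
  apply Rabs_def2 in H1. apply Rabs_def2 in H3.
  set (q := / kp). assert (Hq : q * kp = 1) by (unfold q; field; lra).
  assert (Hq0 : 0 < q) by (unfold q; apply Rinv_0_lt_compat; auto).
  assert (Hd : 0 < d) by (pose proof (Rabs_pos (k2y - hy ^ 2)); unfold Rdiv in H2; 
    assert (0 <= Rabs (k2y - hy ^ 2) * / hy) by (apply Rmult_le_pos; [lra| apply Rlt_le, Rinv_0_lt_compat; auto]); lra).
  assert (Hkey : Rabs (hy - kp) * (hy + kp) < d * (hy + 1)).
  { rewrite <- (Rabs_right (hy + kp)) by lra. rewrite <- Rabs_mult.
    apply Rabs_def1; simpl in *; nra. }
  assert (d * (hy + 1) <= d * (1 + q) * (hy + kp)).
  { assert (hy + 1 <= (1 + q) * (hy + kp)) by nra. nra. }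
  pose proof (Rabs_pos (hy - kp)).
  destruct (Rle_dec (Rabs (hy - kp)) (d * (1 + q))); auto. nra.
Qed.

Lemma E_est h0 N M kp t2 d : 0 < kp -> 0 <= t2 -> 0 < d -> d <= 1 -> d <= kp / 2 ->
  Rabs (h0 - kp) <= d -> Rabs (N - t2) <= d -> Rabs (M - kp * kp * t2) <= d ->
  (h0 * N + M / h0) / 2 <= kp * t2 + d * (kp + (1 + t2) / kp).
Proof.
  intros Hkp Ht2 Hd Hd1 Hd2 A1 A2 A3.
  apply abs_le_b in A1. apply abs_le_b in A2. apply abs_le_b in A3.
  assert (Hh : kp / 2 <= h0) by lra.
  assert (Hh0 : 0 < h0) by lra.
  set (q := / h0). assert (Hq : q * h0 = 1) by (unfold q; field; lra).
  assert (Hq0 : 0 < q) by (unfold q; apply Rinv_0_lt_compat; auto).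
  assert (Hq1 : q <= 2 / kp).
  { unfold q. replace (2 / kp) with (/ (kp / 2)) by (field; lra). apply Rinv_le_contravar; lra. }
  set (p := / kp). assert (Hp : p * kp = 1) by (unfold p; field; lra).
  assert (Hp0 : 0 < p) by (unfold p; apply Rinv_0_lt_compat; auto).
  replace (2 / kp) with (2 * p) in Hq1 by (unfold p; field; lra).
  replace ((1 + t2) / kp) with ((1 + t2) * p) by (unfold p; field; lra).
  unfold Rdiv. fold q.
  assert (Eq : (h0 * N + M * q) * / 2 - kp * t2 =
     (h0 * (N - t2) + (M - kp * kp * t2) * q) / 2 + t2 * ((h0 - kp) * (h0 - kp)) * q / 2).
  { unfold q. field. lra. }
  assert (B1 : h0 * (N - t2) <= (3 * kp / 2) * d).
  { destruct (Rle_dec 0 (N - t2)). nra. nra. }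
  assert (B2 : (M - kp * kp * t2) * q <= d * (2 * p)).
  { destruct (Rle_dec 0 (M - kp * kp * t2)). nra. nra. }
  assert (B3 : t2 * ((h0 - kp) * (h0 - kp)) * q <= t2 * d * (2 * p)).
  { assert ((h0 - kp) * (h0 - kp) <= d * d) by nra.
    assert (d * d <= d) by nra.
    assert ((h0 - kp) * (h0 - kp) * q <= d * (2 * p)) by nra. nra. }
  assert (kp * d * (3/4) + d * p + t2 * d * p <= d * (kp + (1 + t2) * p)) by nra.
  lra.
Qed.

Lemma left_alg R r0 w T0 d : 0 <= r0 -> 0 < T0 -> T0 * T0 = r0 * r0 + w * w -> r0 - d <= R -> 0 <= d ->
  T0 - d <= sqrt (R * R + w * w).
Proof.
  intros Hr0 HT HTT HR Hd.
  destruct (Rle_dec (T0 - d) 0). pose proof (sqrt_pos (R * R + w * w)). lra.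
  rewrite <- (sqrt_Rsqr (T0 - d)) by lra. apply sqrt_le_1_alt. unfold Rsqr.
  assert (r0 <= T0) by nra.
  destruct (Rle_dec 0 (r0 - d)).
  - assert ((r0 - d) * (r0 - d) <= R * R) by nra. nra.
  - assert (r0 * r0 <= d * d) by nra. nra.
Qed.

Lemma X_lower E R w eps : 0 <= E -> 0 < eps -> E * E >= R * R + w * w ->
  sqrt (R * R + w * w) + Rabs R <= E + eps + sqrt ((E + eps) * (E + eps) - w * w).
Proof.
  intros HE He HEE.
  assert (A : sqrt (R * R + w * w) <= E).
  { rewrite <- (sqrt_Rsqr E) by lra. apply sqrt_le_1_alt. unfold Rsqr. lra. }
  assert (B : Rabs R <= sqrt ((E + eps) * (E + eps) - w * w)).
  { rewrite <- sqrt_Rsqr_abs. apply sqrt_le_1_alt. unfold Rsqr. nra. }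
  lra.
Qed.

Lemma X_upper E w eps t : 0 <= E -> 0 < eps -> E <= w + t ->
  E + eps + sqrt ((E + eps) * (E + eps) - w * w) <= w + t + eps + sqrt ((w + t + eps) * (w + t + eps) - w * w).
Proof.
  intros. assert (sqrt ((E + eps) * (E + eps) - w * w) <= sqrt ((w + t + eps) * (w + t + eps) - w * w)).
  { apply sqrt_le_1_alt. nra. }
  lra.
Qed.


Lemma exp_le x y : x <= y -> exp x <= exp y.
Proof. intros [H|H]. apply Rlt_le, exp_increasing; auto. subst; lra. Qed.

Theorem mainTheorem5
  (k2 : R -> R) (kp km : R)
  (Hpc : piecewise_continuous k2)
  (Hkp : 0 < kp) (Hkm : 0 < km)
  (Hlp : lim_pinf k2 (kp ^ 2)) (Hlm : lim_minf k2 (km ^ 2))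
  (Hip : integrable_near_pinf (fun x => k2 x - kp ^ 2))
  (Him : integrable_near_minf (fun x => k2 x - km ^ 2))
  (ur ui : R -> R) (rr ri tr ti : R)
  (Hur : is_solution k2 ur) (Hui : is_solution k2 ui)
  (Hasm_re : lim_minf (fun x => ur x - (cos (km * x) + rr * cos (km * x) + ri * sin (km * x))) 0)
  (Hasm_im : lim_minf (fun x => ui x - (sin (km * x) + ri * cos (km * x) - rr * sin (km * x))) 0)
  (Hasp_re : lim_pinf (fun x => ur x - (tr * cos (kp * x) - ti * sin (kp * x))) 0)
  (Hasp_im : lim_pinf (fun x => ui x - (tr * sin (kp * x) + ti * cos (kp * x))) 0)
  (h h' : R -> R)
  (Hhpos : forall x, 0 < h x)
  (Hhd : forall x, derivable_pt_lim h x (h' x))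
  (Hh'c : continuity h')
  (I : R)
  (HI : improper_integral_R
          (fun x => Rabs (h' x / h x) + Rabs (k2 x - h x ^ 2) / h x) I) :
  kp / km * (tr ^ 2 + ti ^ 2) >= Rsqr (sech (I / 2)).
Proof.
  destruct Hur as [ur' [Hu1 [Hu2 Hu3]]]. destruct Hui as [ui' [Hv1 [Hv2 Hv3]]].
  assert (Lr : lim_minf (fun x => ur x - ((1 + rr) * cos (km * x) + ri * sin (km * x))) 0).
  { eapply lim_minf_ext; [|exact Hasm_re]. intro x; simpl; ring. }
  assert (Li : lim_minf (fun x => ui x - (ri * cos (km * x) + (1 - rr) * sin (km * x))) 0).
  { eapply lim_minf_ext; [|exact Hasm_im]. intro x; simpl; ring. }
  pose proof (asym_left k2 ur ur' km (1 + rr) ri Hpc Hkm Hu1 Hu2 Hu3 Him Lr) as Lr'.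
  pose proof (asym_left k2 ui ui' km ri (1 - rr) Hpc Hkm Hv1 Hv2 Hv3 Him Li) as Li'.
  assert (Rr0 : lim_pinf (fun x => ur x - (tr * cos (kp * x) + - ti * sin (kp * x))) 0).
  { eapply lim_pinf_ext; [|exact Hasp_re]. intro x; simpl; ring. }
  assert (Ri0 : lim_pinf (fun x => ui x - (ti * cos (kp * x) + tr * sin (kp * x))) 0).
  { eapply lim_pinf_ext; [|exact Hasp_im]. intro x; simpl; ring. }
  pose proof (asym_right k2 ur ur' kp tr (- ti) Hpc Hkp Hu1 Hu2 Hu3 Hip Rr0) as Rr'.
  pose proof (asym_right k2 ui ui' kp ti tr Hpc Hkp Hv1 Hv2 Hv3 Hip Ri0) as Ri'.
  set (w := W ur ui ur' ui' 0).
  assert (HWc : forall x, ur x * ui' x - ui x * ur' x = w).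
  { intro x. transitivity (W ur ui ur' ui' x). reflexivity.
    apply (W_const k2 h h' ur ui ur' ui' Hpc Hhpos Hhd Hh'c Hu1 Hu2 Hu3 Hv1 Hv2 Hv3). }
  pose proof (left_W km rr ri ur ur' ui ui' Hkm Lr Lr' Li Li' w HWc) as HwL.
  pose proof (right_W kp tr ti ur ur' ui ui' Hkp Rr0 Rr' Ri0 Ri' w HWc) as HwR.
  set (fI := HfI k2 h h' Hpc Hhpos Hhd Hh'c).
  assert (HIb : forall a b, a <= b -> Int (fint k2 h h') fI a b <= I).
  { intros a b Hab. apply (proj1 HI). exists a, b. split; auto. apply Int_on; auto. }
  assert (HI0 : 0 <= I). { pose proof (HIb 0 0 (Rle_refl 0)) as T. rewrite Int_refl in T. auto. }
  set (X := fun eps x => E h ur ui ur' ui' x + eps +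
              sqrt ((E h ur ui ur' ui' x + eps) * (E h ur ui ur' ui' x + eps) - w * w)).
  assert (HX : forall eps x, 0 < eps -> 0 < X eps x).
  { intros. unfold X. pose proof (E_nonneg h ur ui ur' ui' Hhpos x).
    pose proof (sqrt_pos ((E h ur ui ur' ui' x + eps) * (E h ur ui ur' ui' x + eps) - w * w)). lra. }
  assert (KeyX : forall eps x y, 0 < eps -> x <= y -> X eps x <= X eps y * exp I).
  { intros eps x y He Hxy.
    pose proof (G_bound k2 h h' ur ui ur' ui' Hpc Hhpos Hhd Hh'c Hu1 Hu2 Hu3 Hv1 Hv2 Hv3 eps x y He Hxy) as G.
    fold w in G. fold fI in G. apply abs_le_b in G. pose proof (HIb x y Hxy).
    assert (Gf h ur ui ur' ui' eps w x <= Gf h ur ui ur' ui' eps w y + I) by lra.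
    apply exp_le in H0. rewrite exp_plus in H0. unfold Gf in H0. rewrite !exp_ln in H0.
    exact H0. apply HX; auto. apply HX; auto. }
  set (tau2 := tr * tr + ti * ti).
  assert (RE : forall t N0, 0 < t -> exists y, N0 < y /\ E h ur ui ur' ui' y <= w + t).
  { intros t N0 Ht.
    assert (Ht2 : 0 <= tau2) by (unfold tau2; nra).
    set (C := kp + (1 + tau2) / kp).
    assert (HC : 0 < C) by (unfold C; assert (0 < (1 + tau2) / kp) by (apply Rdiv_lt_0_compat; lra); lra).
    set (d1 := Rmin 1 (Rmin (kp/2) (t / C))).
    assert (Hd1 : 0 < d1) by (apply Rmin_pos; [lra|apply Rmin_pos; [lra|apply Rdiv_lt_0_compat; lra]]).
    assert (Hd11 : d1 <= 1) by apply Rmin_l.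
    assert (Hd12 : d1 <= kp / 2) by (eapply Rle_trans; [apply Rmin_r|apply Rmin_l]).
    assert (Hd13 : d1 <= t / C) by (eapply Rle_trans; [apply Rmin_r|apply Rmin_r]).
    assert (Hq : 0 < 1 + / kp) by (pose proof (Rinv_0_lt_compat kp Hkp); lra).
    set (del := d1 / (1 + / kp)).
    assert (Hdel : 0 < del) by (apply Rdiv_lt_0_compat; lra).
    destruct (right_NM kp tr ti ur ur' ui ui' Hkp Rr0 Rr' Ri0 Ri' d1 N0 Hd1) as [N [HN0 HN]].
    destruct (Hlp del Hdel) as [M1 HM1].
    assert (Hgood : exists y, Rmax N M1 < y /\ fint k2 h h' y < del).
    { apply NNPP. intro Hno.
      assert (Hall : forall y, Rmax N M1 < y -> del <= fint k2 h h' y).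
      { intros y Hy. apply Rnot_lt_le. intro. apply Hno. exists y. auto. }
      set (a := Rmax N M1 + 1). set (L := (Rabs I + 1) / del).
      assert (HL : 0 < L) by (unfold L; apply Rdiv_lt_0_compat; pose proof (Rabs_pos I); lra).
      assert (T1 : Int (fint k2 h h') fI a (a + L) <= I) by (apply HIb; lra).
      assert (T2 : del * (a + L - a) <= Int (fint k2 h h') fI a (a + L)).
      { apply Int_lower. lra. intros z Hz. apply Hall. unfold a in Hz. lra. }
      replace (a + L - a) with L in T2 by ring.
      replace (del * L) with (Rabs I + 1) in T2 by (unfold L; field; lra).
      pose proof (Rle_abs I). lra. }
    destruct Hgood as [y [Hy Hfy]].
    pose proof (Rmax_l N M1). pose proof (Rmax_r N M1).
    exists y. split. lra.
    destruct (HN y ltac:(lra)) as [HNy HMy].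
    assert (Hk2y : Rabs (k2 y - kp ^ 2) < del) by (apply HM1; lra).
    assert (Hf2 : Rabs (k2 y - h y ^ 2) / h y < del).
    { unfold fint in Hfy. pose proof (Rabs_pos (h' y / h y)). lra. }
    pose proof (h_close (k2 y) (h y) kp del Hkp (Hhpos y) Hk2y Hf2) as Hhc.
    replace (del * (1 + / kp)) with d1 in Hhc by (unfold del; field; lra).
    pose proof (E_est (h y) (ur y * ur y + ui y * ui y) (ur' y * ur' y + ui' y * ui' y) kp tau2 d1
       Hkp Ht2 Hd1 Hd11 Hd12 Hhc HNy HMy) as HE.
    unfold E. fold C in HE.
    assert (d1 * C <= t).
    { apply (Rmult_le_compat_r C) in Hd13; [|lra]. unfold Rdiv in Hd13.
      rewrite Rmult_assoc, Rinv_l in Hd13 by lra. lra. }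
    rewrite HwR. fold tau2. lra. }
  set (rho := sqrt (rr * rr + ri * ri)).
  assert (Hrho : rho * rho = rr * rr + ri * ri) by (apply sqrt_sqrt; nra).
  assert (Hrho0 : 0 <= rho) by apply sqrt_pos.
  assert (HwL' : w = km * (1 - rho * rho)) by (rewrite Hrho; auto).
  assert (Hw0 : 0 <= w) by (rewrite HwR; nra).
  assert (HeI : 1 <= exp I) by (pose proof (exp_ineq1_le I); lra).
  assert (Kin : km * ((1 + rho) * (1 + rho)) <= exp I * w).
  { apply final_alg; auto.
    intros eta t Heta Ht Ht1.
    destruct (left_R km rr ri ur ur' ui ui' Hkm Lr Lr' Li Li' (eta / 2) ltac:(lra)) as [x Hx].
    fold rho in Hx.
    destruct (RE (t / 2) x ltac:(lra)) as [y [Hy HEy]].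
    pose proof (KeyX (t / 2) x y ltac:(lra) ltac:(lra)) as KX.
    assert (Lo : km * ((1 + rho) * (1 + rho)) - eta <= X (t / 2) x).
    { unfold X.
      pose proof (E_id h ur ui ur' ui' Hhpos x) as Eid.
      change (W ur ui ur' ui' x) with (ur x * ui' x - ui x * ur' x) in Eid. rewrite HWc in Eid.
      assert (EE : E h ur ui ur' ui' x * E h ur ui ur' ui' x >= Rr ur ui ur' ui' x * Rr ur ui ur' ui' x + w * w) by nra.
      pose proof (X_lower _ _ w (t / 2) (E_nonneg h ur ui ur' ui' Hhpos x) ltac:(lra) EE) as XL.
      assert (LA : km * (1 + rho * rho) - eta / 2 <= sqrt (Rr ur ui ur' ui' x * Rr ur ui ur' ui' x + w * w)).
      { apply (left_alg _ (2 * km * rho)). nra. nra. rewrite HwL'. ring. unfold Rr. lra. lra. }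
      pose proof (Rle_abs (Rr ur ui ur' ui' x)). unfold Rr at 1 in H. lra. }
    assert (Up : X (t / 2) y <= w + t + sqrt ((w + t) * (w + t) - w * w)).
    { unfold X. pose proof (X_upper (E h ur ui ur' ui' y) w (t / 2) (t / 2)
        (E_nonneg h ur ui ur' ui' Hhpos y) ltac:(lra) HEy) as XU.
      replace (w + t / 2 + t / 2) with (w + t) in XU by field. exact XU. }
    assert (X (t / 2) y * exp I <= exp I * (w + t + sqrt ((w + t) * (w + t) - w * w))).
    { rewrite Rmult_comm. apply Rmult_le_compat_l; lra. }
    lra. }
  rewrite HwL' in Kin.
  assert (K2 : (1 + rho) * (1 + rho) <= exp I * (1 - rho * rho)).
  { apply (Rmult_le_reg_l km); auto. lra. }
  pose proof (sech_alg I rho Hrho0 K2) as S.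
  assert (Eq : kp / km * (tr ^ 2 + ti ^ 2) = 1 - rho * rho).
  { replace (tr ^ 2 + ti ^ 2) with tau2 by (unfold tau2; ring).
    apply (Rmult_eq_reg_l km); [|lra]. 
    transitivity (kp * tau2). field; lra. unfold tau2. rewrite <- HwR, HwL'. ring. }
  rewrite Eq. lra.
Qed.
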